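(* Let $x_1(t)$ be a smooth real function and $z_1(t),z_2(t),z_3(t)$ smooth complex functions satisfying $$\dot x_1=-3\,\mathrm{Im}(z_1z_2z_3),\quad \dot z_1=z_1(|z_2|^2-|z_3|^2)+ix_1\overline{z_2z_3},$$ $$\dot z_2=z_2(|z_3|^2-|z_1|^2)+ix_1\overline{z_3z_1},\quad \dot z_3=z_3(|z_1|^2-|z_2|^2)+ix_1\overline{z_1z_2},$$ with $\mathrm{Re}(z_1z_2z_3)=0$ at $t=0$, and with initial point whose orbit under the action $(x_1,z_1,z_2,z_3)\mapsto(rx_1,re^{i\phi_1}z_1,re^{i\phi_2}z_2,re^{-i(\phi_1+\phi_2)}z_3)$ ($r>0$, $\phi_1,\phi_2\in\mathbb{R}$) of $\mathbb{R}^+\times\mathrm{U}(1)^2$ is $3$-dimensional. Then the solution exists for all $t\in\mathbb{R}$, $\mathrm{Re}(z_1z_2z_3)=0$ for all $t$, $x_1^2+|z_1|^2+|z_2|^2+|z_3|^2$ is constant (and may be taken to be $1$), and $$M=\big\{\big(rx_1(t),re^{i\phi_1}z_1(t),re^{i\phi_2}z_2(t),re^{-i(\phi_1+\phi_2)}z_3(t)\big):r>0,\ \phi_1,\phi_2,t\in\mathbb{R}\big\}$$ is a coassociative $4$-fold in $\mathbb{R}^7$.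
   Context: $\mathbb{R}^7\cong\mathbb{R}\oplus\mathbb{C}^3$ via $z_1=x_2+ix_3$, $z_2=x_4+ix_5$, $z_3=x_6+ix_7$. Coassociative $4$-folds are oriented $4$-dimensional submanifolds calibrated by $\ast\varphi_0=d\mathbf{x}_{4567}+d\mathbf{x}_{2367}+d\mathbf{x}_{2345}+d\mathbf{x}_{1357}-d\mathbf{x}_{1346}-d\mathbf{x}_{1256}-d\mathbf{x}_{1247}$ (equivalently, suitably oriented $4$-folds on which $\varphi_0=d\mathbf{x}_{123}+d\mathbf{x}_{145}+d\mathbf{x}_{167}+d\mathbf{x}_{246}-d\mathbf{x}_{257}-d\mathbf{x}_{347}-d\mathbf{x}_{356}$ vanishes), where $d\mathbf{x}_{ij\dots k}=dx_i\wedge dx_j\wedge\dots\wedge dx_k$. *)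

(* Defs.v *)
From Stdlib Require Import Reals.
From Coquelicot Require Import Coquelicot.
Open Scope R_scope.

(** Points of R^7 as functions of the coordinate index; only indices 1..7 matter. *)
Definition vec7 := nat -> R.

Definition embed (x1 : R) (z1 z2 z3 : C) : vec7 := fun i =>
  match i with
  | 1%nat => x1 | 2%nat => Re z1 | 3%nat => Im z1
  | 4%nat => Re z2 | 5%nat => Im z2
  | 6%nat => Re z3 | 7%nat => Im z3
  | _ => 0 end.

Definition eiC (phi : R) : C := (cos phi, sin phi).

Definition act (r p1 p2 x1 : R) (z1 z2 z3 : C) : vec7 :=
  embed (r * x1) (Cmult (RtoC r) (Cmult (eiC p1) z1))
                 (Cmult (RtoC r) (Cmult (eiC p2) z2))
                 (Cmult (RtoC r) (Cmult (eiC (- (p1 + p2))) z3)).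

Definition dx3 (i j k : nat) (u v w : vec7) : R :=
  u i * (v j * w k - v k * w j)
  - u j * (v i * w k - v k * w i)
  + u k * (v i * w j - v j * w i).

Definition phi0 (u v w : vec7) : R :=
  dx3 1 2 3 u v w + dx3 1 4 5 u v w + dx3 1 6 7 u v w + dx3 2 4 6 u v w
  - dx3 2 5 7 u v w - dx3 3 4 7 u v w - dx3 3 5 6 u v w.

Definition lin_indep (n : nat) (v : nat -> vec7) : Prop :=
  forall c : nat -> R,
    (forall i, (1 <= i <= 7)%nat ->
       sum_f_R0 (fun k => c k * v k i) (n - 1) = 0) ->
    forall k, (k < n)%nat -> c k = 0.

Definition orbit_diff (x1 : R) (z1 z2 z3 : C) (k : nat) : vec7 := fun i =>
  match k with
  | 0%nat => Derive (fun s => act s 0 0 x1 z1 z2 z3 i) 1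
  | 1%nat => Derive (fun s => act 1 s 0 x1 z1 z2 z3 i) 0
  | _ => Derive (fun s => act 1 0 s x1 z1 z2 z3 i) 0
  end.

(** The orbit of the point under R^+ x U(1)^2 is 3-dimensional:
    the orbit map has rank 3 (at the identity, hence everywhere by equivariance). *)
Definition orbit_dim3 (x1 : R) (z1 z2 z3 : C) : Prop :=
  lin_indep 3 (orbit_diff x1 z1 z2 z3).

Definition is_global_solution (x1 : R -> R) (z1 z2 z3 : R -> C) : Prop :=
  forall t : R,
    is_derive x1 t (-3 * Im (Cmult (Cmult (z1 t) (z2 t)) (z3 t))) /\
    is_derive z1 t (Cplus (Cmult (z1 t) (RtoC (Cmod (z2 t) ^ 2 - Cmod (z3 t) ^ 2)))
                          (Cmult (Cmult Ci (RtoC (x1 t))) (Cconj (Cmult (z2 t) (z3 t))))) /\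
    is_derive z2 t (Cplus (Cmult (z2 t) (RtoC (Cmod (z3 t) ^ 2 - Cmod (z1 t) ^ 2)))
                          (Cmult (Cmult Ci (RtoC (x1 t))) (Cconj (Cmult (z3 t) (z1 t))))) /\
    is_derive z3 t (Cplus (Cmult (z3 t) (RtoC (Cmod (z1 t) ^ 2 - Cmod (z2 t) ^ 2)))
                          (Cmult (Cmult Ci (RtoC (x1 t))) (Cconj (Cmult (z1 t) (z2 t))))).

Definition partial4 (F : R -> R -> R -> R -> vec7) (r p1 p2 t : R) (k : nat) : vec7 :=
  fun i => match k with
  | 0%nat => Derive (fun s => F s p1 p2 t i) r
  | 1%nat => Derive (fun s => F r s p2 t i) p1
  | 2%nat => Derive (fun s => F r p1 s t i) p2
  | _ => Derive (fun s => F r p1 p2 s i) t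
  end.

(** The image of F restricted to {r > 0} is a (immersed) coassociative 4-fold:
    F is an immersion there (its differential has rank 4) and phi0 vanishes on
    every tangent 4-plane (phi0 is trilinear, so vanishing on triples of the
    basis vectors dF(e_j) is vanishing on the plane). *)
Definition coassociative_param (F : R -> R -> R -> R -> vec7) : Prop :=
  forall r p1 p2 t, 0 < r ->
    (forall i, (1 <= i <= 7)%nat ->
       ex_derive (fun s => F s p1 p2 t i) r /\ ex_derive (fun s => F r s p2 t i) p1 /\
       ex_derive (fun s => F r p1 s t i) p2 /\ ex_derive (fun s => F r p1 p2 s i) t) /\
    lin_indep 4 (partial4 F r p1 p2 t) /\
    forall j k l, (j < 4)%nat -> (k < 4)%nat -> (l < 4)%nat ->
      phi0 (partial4 F r p1 p2 t j) (partial4 F r p1 p2 t k)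
           (partial4 F r p1 p2 t l) = 0.

(* Main.v *)
Require Import Defs.
From Stdlib Require Import Reals Lra Lia Nsatz FunctionalExtensionality.
From Coquelicot Require Import Coquelicot.
Open Scope R_scope.

Lemma lip_cont (f : R -> R) K :
  (forall s s', Rabs (f s - f s') <= K * Rabs (s - s')) -> forall x, continuous f x.
Proof.
intros H x. apply continuity_pt_filterlim. intros eps Heps.
assert (HK : 0 < Rabs K + 1) by (pose proof (Rabs_pos K); lra).
exists (eps / (Rabs K + 1)). split. apply Rdiv_lt_0_compat; lra.
intros y [_ Hy]. unfold R_dist in *. simpl in *. unfold R_dist in *.
eapply Rle_lt_trans. apply H.
apply Rle_lt_trans with (Rabs K * Rabs (y - x)).
apply Rmult_le_compat_r. apply Rabs_pos. apply RRle_abs.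
apply Rle_lt_trans with ((Rabs K + 1) * Rabs (y - x)).
pose proof (Rabs_pos (y - x)); nra.
apply Rmult_lt_reg_l with (/ (Rabs K + 1)). apply Rinv_0_lt_compat; lra.
rewrite <- Rmult_assoc, Rinv_l by lra. unfold Rdiv in Hy. lra.
Qed.

Lemma normR (x : R) : norm x = Rabs x.
Proof. reflexivity. Qed.

Lemma int_bound (g : R -> R) (C : R) (k : nat) (t : R) :
  ex_RInt g 0 t -> 0 <= C ->
  (forall s, Rmin 0 t <= s <= Rmax 0 t -> Rabs (g s) <= C * Rabs s ^ k) ->
  Rabs (RInt g 0 t) <= C * Rabs t ^ (S k) / INR (S k).
Proof.
intros Hex HC Hb.
assert (HS : INR (S k) <> 0) by (apply not_0_INR; lia).
assert (HS' : 0 < INR (S k)) by (apply lt_0_INR; lia).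
destruct (Rle_or_lt 0 t) as [Ht|Ht].
- assert (HI : is_RInt (fun s => C * s ^ k) 0 t (C * t ^ S k / INR (S k))).
  { assert (H0 := is_RInt_derive (fun s => C * s^(S k)/INR (S k)) (fun s => C * s ^ k) 0 t).
    replace (C * t ^ S k / INR (S k)) with
      (minus ((fun s => C * s^(S k)/INR (S k)) t) ((fun s => C * s^(S k)/INR (S k)) 0)).
    apply H0.
    + intros x _. auto_derive. auto. change (C * (1 * (INR (S k) * x ^ k)) * / INR (S k) = C * x ^ k). field. auto.
    + intros x _. apply (@ex_derive_continuous R_AbsRing R_NormedModule). auto_derive. auto.
    + set (m := INR (S k)). unfold minus, plus, opp; simpl. field. auto. }
  rewrite (Rabs_pos_eq t Ht).
  rewrite <- normR. apply (norm_RInt_le g (fun s => C * s ^ k) 0 t); auto.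
  intros x Hx. rewrite normR. replace (C * x ^ k) with (C * Rabs x ^ k) by (rewrite Rabs_pos_eq; lra). apply Hb.
  rewrite Rmin_left, Rmax_right; lra.
  apply (@RInt_correct R_CompleteNormedModule); auto.
- assert (HI : is_RInt (fun s => C * (-s) ^ k) t 0 (C * (-t) ^ S k / INR (S k))).
  { assert (H0 := is_RInt_derive (fun s => - C * (-s)^(S k)/INR (S k)) (fun s => C * (-s) ^ k) t 0).
    replace (C * (-t) ^ S k / INR (S k)) with
      (minus ((fun s => - C * (-s)^(S k)/INR (S k)) 0) ((fun s => - C * (-s)^(S k)/INR (S k)) t)).
    apply H0.
    + intros x _. auto_derive. auto. change (- C * (-1 * (INR (S k) * (-x) ^ k)) * / INR (S k) = C * (-x) ^ k). field. auto.
    + intros x _. apply (@ex_derive_continuous R_AbsRing R_NormedModule). auto_derive. auto.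
    + set (m := INR (S k)). unfold minus, plus, opp; simpl. field. auto. }
  rewrite (Rabs_left t Ht).
  rewrite <- (opp_RInt_swap g t 0). 2: apply ex_RInt_swap; auto.
  change (opp (RInt g t 0)) with (- RInt g t 0). rewrite Rabs_Ropp, <- normR. apply (norm_RInt_le g (fun s => C * (-s) ^ k) t 0); auto.
  lra.
  intros x Hx. rewrite normR. destruct (Req_dec x 0) as [->|Hx0].
  + replace (-0) with (Rabs 0) by (rewrite Rabs_R0; ring). apply Hb. rewrite Rmin_right, Rmax_left; lra.
  + replace (C * (-x) ^ k) with (C * Rabs x ^ k) by (rewrite Rabs_left; lra). apply Hb. rewrite Rmin_right, Rmax_left; lra.
  apply (@RInt_correct R_CompleteNormedModule). apply ex_RInt_swap; auto.
Qed.

Definition n7 (v : vec7) : R := Rabs (v 1%nat) + Rabs (v 2%nat) + Rabs (v 3%nat) +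
  Rabs (v 4%nat) + Rabs (v 5%nat) + Rabs (v 6%nat) + Rabs (v 7%nat).
Definition vsub (v w : vec7) : vec7 := fun i => v i - w i.

Lemma n7_comp v i : (1 <= i <= 7)%nat -> Rabs (v i) <= n7 v.
Proof.
intros H. unfold n7.
pose proof (Rabs_pos (v 1%nat)); pose proof (Rabs_pos (v 2%nat)); pose proof (Rabs_pos (v 3%nat));
pose proof (Rabs_pos (v 4%nat)); pose proof (Rabs_pos (v 5%nat)); pose proof (Rabs_pos (v 6%nat));
pose proof (Rabs_pos (v 7%nat)).
assert (i = 1 \/ i = 2 \/ i = 3 \/ i = 4 \/ i = 5 \/ i = 6 \/ i = 7)%nat as Hi by lia.
destruct Hi as [->|[->|[->|[->|[->|[->| ->]]]]]]; lra.
Qed.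

Lemma n7_bound v B : (forall i, (1 <= i <= 7)%nat -> Rabs (v i) <= B) -> n7 v <= 7 * B.
Proof.
intros H. unfold n7.
pose proof (H 1%nat ltac:(lia)); pose proof (H 2%nat ltac:(lia)); pose proof (H 3%nat ltac:(lia));
pose proof (H 4%nat ltac:(lia)); pose proof (H 5%nat ltac:(lia)); pose proof (H 6%nat ltac:(lia));
pose proof (H 7%nat ltac:(lia)). lra.
Qed.

Lemma eps_zero (x : R) : (forall eps, 0 < eps -> Rabs x <= eps) -> x = 0.
Proof.
intro H. assert (Rabs x <= 0). apply le_epsilon. intros; rewrite Rplus_0_l; auto.
pose proof (Rabs_pos x). destruct (Req_dec x 0); auto. apply Rabs_no_R0 in H2. lra.
Qed.

Lemma RInt_lip (g : R -> R) K M : (forall s s', Rabs (g s - g s') <= K * Rabs (s - s')) ->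
  (forall s, Rabs (g s) <= M) -> forall t t', Rabs (RInt g 0 t - RInt g 0 t') <= M * Rabs (t - t').
Proof.
intros Hl Hb t t'.
assert (Hex : forall a b, ex_RInt g a b).
{ intros a b. apply (@ex_RInt_continuous R_CompleteNormedModule). intros z _. apply (lip_cont g K Hl). }
assert (E : RInt g 0 t = RInt g 0 t' + RInt g t' t).
{ rewrite <- (RInt_Chasles g 0 t' t) by auto. reflexivity. }
rewrite E. unfold Rminus. rewrite (Rplus_comm (RInt g 0 t')), Rplus_assoc, Rplus_opp_r, Rplus_0_r. fold (t - t').
destruct (Rle_or_lt t' t) as [H|H].
- rewrite (Rabs_pos_eq (t - t')) by lra. rewrite Rmult_comm. apply abs_RInt_le_const; auto.
- rewrite <- (opp_RInt_swap g t t') by auto.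
  change (opp (RInt g t t')) with (- RInt g t t'). rewrite Rabs_Ropp.
  rewrite (Rabs_left (t - t')) by lra. replace (- (t - t')) with (t' - t) by ring.
  rewrite Rmult_comm. apply abs_RInt_le_const; auto. lra.
Qed.

Lemma aux1 (a b : R) : a + b - a = b. Proof. ring. Qed.
Lemma aux2 (a b c : R) : (a + b) - (a + c) = b - c. Proof. ring. Qed.

Section Picard.
Variable F : vec7 -> vec7.
Variables M L : R.
Hypothesis HM : 0 <= M.
Hypothesis HL : 0 < L.
Hypothesis Fb : forall v i, (1 <= i <= 7)%nat -> Rabs (F v i) <= M.
Hypothesis Fl : forall v w i, (1 <= i <= 7)%nat -> Rabs (F v i - F w i) <= L * n7 (vsub v w).
Variable y0 : vec7.

Fixpoint pic (k : nat) (t : R) : vec7 :=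
  match k with O => y0 | S k => fun i => y0 i + RInt (fun s => F (pic k s) i) 0 t end.

Lemma F_comp_lip (Y : R -> vec7) K :
  (forall i t t', (1 <= i <= 7)%nat -> Rabs (Y t i - Y t' i) <= K * Rabs (t - t')) ->
  forall i t t', (1 <= i <= 7)%nat -> Rabs (F (Y t) i - F (Y t') i) <= (L * (7 * K)) * Rabs (t - t').
Proof.
intros H i t t' Hi. eapply Rle_trans. apply Fl; auto. rewrite Rmult_assoc. apply Rmult_le_compat_l; [lra|].
replace (7 * K * Rabs (t - t')) with (7 * (K * Rabs (t - t'))) by ring.
apply n7_bound. intros j Hj. apply H; auto.
Qed.

Lemma pic_lip k : forall i t t', (1 <= i <= 7)%nat -> Rabs (pic k t i - pic k t' i) <= M * Rabs (t - t').
Proof.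
induction k as [|k IH]; intros i t t' Hi; simpl.
- unfold Rminus. rewrite Rplus_opp_r, Rabs_R0. pose proof (Rabs_pos (t + - t')). nra.
- rewrite aux2.
  apply (RInt_lip _ (L * (7 * M))).
  + intros s s'. apply (F_comp_lip (pic k) M IH); auto.
  + intros s; apply Fb; auto.
Qed.

Lemma pic_ex k i a b : (1 <= i <= 7)%nat -> ex_RInt (fun s => F (pic k s) i) a b.
Proof.
intros Hi. apply (@ex_RInt_continuous R_CompleteNormedModule). intros z _.
apply (lip_cont _ (L * (7 * M))). intros s s'. apply (F_comp_lip (pic k) M (pic_lip k)); auto.
Qed.

Definition cb (k : nat) (T : R) := M * (7 * L) ^ k * Rabs T ^ (S k) / INR (Factorial.fact (S k)).

Lemma pic_diff k : forall t i, (1 <= i <= 7)%nat -> Rabs (pic (S k) t i - pic k t i) <= cb k t.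
Proof.
induction k as [|k IH]; intros t i Hi.
- simpl pic. rewrite aux1.
  unfold cb. replace (M * (7 * L) ^ 0 * Rabs t ^ 1 / INR (Factorial.fact 1)) with (M * Rabs t ^ 1 / INR 1)
    by (simpl; field).
  apply int_bound. apply (pic_ex 0); auto. auto. intros s _. simpl. rewrite Rmult_1_r. apply Fb; auto.
- change (pic (S (S k)) t i) with (y0 i + RInt (fun s => F (pic (S k) s) i) 0 t).
  change (pic (S k) t i) with (y0 i + RInt (fun s => F (pic k s) i) 0 t).
  rewrite aux2.
  replace (RInt (fun s => F (pic (S k) s) i) 0 t - RInt (fun s => F (pic k s) i) 0 t)
    with (RInt (fun s => F (pic (S k) s) i - F (pic k s) i) 0 t).
  2: { rewrite (RInt_minus (V := R_CompleteNormedModule)); [|apply pic_ex; auto|apply pic_ex; auto]. 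
       reflexivity. }
  assert (HF : 0 < INR (Factorial.fact (S k))) by (apply lt_0_INR; apply Factorial.lt_O_fact).
  assert (HC : 0 <= L * 7 * M * (7 * L) ^ k / INR (Factorial.fact (S k))).
  { apply Rmult_le_pos; [|left; apply Rinv_0_lt_compat; auto].
    apply Rmult_le_pos. nra. apply pow_le. lra. }
  eapply Rle_trans. apply (int_bound _ (L * 7 * M * (7 * L) ^ k / INR (Factorial.fact (S k))) (S k)).
  + apply (@ex_RInt_minus R_NormedModule); apply pic_ex; auto.
  + auto.
  + intros s _. eapply Rle_trans. apply Fl; auto.
    replace (L * 7 * M * (7 * L) ^ k / INR (Factorial.fact (S k)) * Rabs s ^ S k) with (L * (7 * cb k s))
      by (unfold cb; field; lra).
    apply Rmult_le_compat_l; [lra|]. apply n7_bound. intros j Hj. apply IH; auto.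
  + unfold cb. right.
    change (Factorial.fact (S (S k))) with (S (S k) * Factorial.fact (S k))%nat. rewrite mult_INR.
    simpl pow. field. split; [lra|]. apply not_0_INR; lia.
Qed.

Lemma tri3 (a b c : R) : Rabs (a + b - c) <= Rabs a + Rabs b + Rabs c.
Proof. unfold Rminus. eapply Rle_trans. apply Rabs_triang. rewrite Rabs_Ropp. pose proof (Rabs_triang a b). lra. Qed.

Lemma cb_mono k s T : Rabs s <= T -> cb k s <= cb k T.
Proof.
intros H. unfold cb. assert (HT : 0 <= T) by (pose proof (Rabs_pos s); lra).
apply Rmult_le_compat_r. left; apply Rinv_0_lt_compat, lt_0_INR, Factorial.lt_O_fact.
apply Rmult_le_compat_l. apply Rmult_le_pos; auto. apply pow_le; lra.
apply pow_incr. split. apply Rabs_pos. rewrite (Rabs_pos_eq T); lra.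
Qed.

Lemma cb_series T : ex_series (fun k => cb k T).
Proof.
set (x := 7 * L * Rabs T).
assert (H := is_exp_Reals x). unfold is_pseries in H.
assert (H1 : ex_series (fun n => x ^ n / INR (Factorial.fact n))).
{ apply ex_series_ext with (fun n => scal (pow_n x n) (/ INR (Factorial.fact n))).
  intros n. rewrite pow_n_pow. reflexivity. eexists; exact H. }
apply ex_series_incr_1 in H1.
apply (ex_series_scal_l (M / (7 * L))) in H1.
apply ex_series_ext with (2 := H1). intros n.
assert (E : cb n T = M / (7 * L) * ((7 * L * Rabs T) ^ S n / INR (Factorial.fact (S n)))).
{ unfold cb. rewrite !Rpow_mult_distr. simpl pow. field. split. apply not_0_INR, Factorial.fact_neq_0. lra. }
rewrite E. reflexivity.
Qed.

Definition Y (t : R) : vec7 := fun i => y0 i + Series (fun k => pic (S k) t i - pic k t i).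
Definition tail (n : nat) (T : R) := Series (fun k => cb (n + k) T).

Lemma pic_sum n t i : sum_f_R0 (fun k => pic (S k) t i - pic k t i) n = pic (S n) t i - y0 i.
Proof. induction n as [|n IH]. simpl. reflexivity. rewrite tech5, IH. ring. Qed.

Lemma Y_pic n t i T : (1 <= i <= 7)%nat -> Rabs t <= T -> Rabs (Y t i - pic (S n) t i) <= tail (S n) T.
Proof.
intros Hi Ht.
set (d := fun k => pic (S k) t i - pic k t i).
assert (Hd : forall k, Rabs (d k) <= cb k T).
{ intros k. unfold d. eapply Rle_trans. apply (pic_diff k t i Hi). apply cb_mono; auto. }
assert (HcS : ex_series (fun k => cb (S n + k) T)) by (apply (ex_series_incr_n (fun k => cb k T)), cb_series).
assert (Hex : ex_series d). { apply (ex_series_le d (fun k => cb k T)). exact Hd. apply cb_series. }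
unfold Y. fold d. rewrite (Series_incr_n d (S n)) by (auto; lia). simpl pred. unfold d at 1. rewrite pic_sum.
replace (y0 i + (pic (S n) t i - y0 i + Series (fun k => d (S n + k)%nat)) - pic (S n) t i)
  with (Series (fun k => d (S n + k)%nat)) by ring.
eapply Rle_trans. apply Series_Rabs.
{ apply (ex_series_le (fun k => Rabs (d (S n + k)%nat)) (fun k => cb (S n + k) T)). intros k. rewrite normR, Rabs_Rabsolu. apply Hd. auto. }
apply Series_le. intros k; split. apply Rabs_pos. apply Hd. auto.
Qed.

Lemma Series_zero : Series (fun _ => 0) = 0.
Proof. rewrite (Series_ext _ (fun k => 0 * 0)) by (intros; ring). rewrite Series_scal_l. ring. Qed.

Lemma cb_nonneg k T : 0 <= cb k T.
Proof. unfold cb. apply Rmult_le_pos. apply Rmult_le_pos. apply Rmult_le_pos; auto. apply pow_le; lra.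
apply pow_le, Rabs_pos. left; apply Rinv_0_lt_compat, lt_0_INR, Factorial.lt_O_fact. Qed.

Lemma tail_nonneg n T : 0 <= tail n T.
Proof. unfold tail. rewrite <- Series_zero. apply Series_le. intros; split; [lra|apply cb_nonneg].
apply (ex_series_incr_n (fun k => cb k T)), cb_series. Qed.

Lemma tail_small T eps : 0 < eps -> exists N, forall n, (N <= n)%nat -> tail n T < eps.
Proof.
intros He.
assert (H := Series_correct _ (cb_series T)).
assert (H2 : is_lim_seq (fun n => sum_f_R0 (fun k => cb k T) n) (Series (fun k => cb k T))).
{ apply (is_lim_seq_ext (sum_n (fun k => cb k T))). intro; apply sum_n_Reals. exact H. }
apply is_lim_seq_spec in H2. destruct (H2 (mkposreal eps He)) as [N HN].
exists (S N). intros n Hn. unfold tail.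
assert (E := Series_incr_n (fun k => cb k T) n ltac:(lia) (cb_series T)).
specialize (HN (pred n) ltac:(lia)). simpl in HN.
apply Rabs_def2 in HN. lra.
Qed.

Lemma tail_small2 T eps : 0 < eps -> exists n, tail (S n) T < eps /\ tail (S (S n)) T < eps.
Proof. intros He. destruct (tail_small T eps He) as [N HN]. exists N. split; apply HN; lia. Qed.

Lemma Y_lip i t t' : (1 <= i <= 7)%nat -> Rabs (Y t i - Y t' i) <= M * Rabs (t - t').
Proof.
intros Hi. apply le_epsilon. intros eps He.
set (T := Rmax (Rabs t) (Rabs t')).
destruct (tail_small2 T (eps / 2) ltac:(lra)) as [n [Hn _]].
assert (H1 := Y_pic n t i T Hi (Rmax_l _ _)).
assert (H2 := Y_pic n t' i T Hi (Rmax_r _ _)).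
assert (H3 := pic_lip (S n) i t t' Hi).
replace (Y t i - Y t' i) with ((Y t i - pic (S n) t i) + (pic (S n) t i - pic (S n) t' i) - (Y t' i - pic (S n) t' i)) by ring.
eapply Rle_trans. apply tri3. lra.
Qed.

Definition G i s := F (Y s) i.

Lemma G_lip i s s' : (1 <= i <= 7)%nat -> Rabs (G i s - G i s') <= (L * (7 * M)) * Rabs (s - s').
Proof. intros Hi. unfold G. apply (F_comp_lip Y M); auto. intros; apply Y_lip; auto. Qed.

Lemma G_cont i s : (1 <= i <= 7)%nat -> continuous (G i) s.
Proof. intros Hi. apply (lip_cont _ (L * (7 * M))). intros; apply G_lip; auto. Qed.

Lemma G_ex i a b : (1 <= i <= 7)%nat -> ex_RInt (G i) a b.
Proof. intros Hi. apply (@ex_RInt_continuous R_CompleteNormedModule). intros; apply G_cont; auto. Qed.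

Lemma Y_int i t : (1 <= i <= 7)%nat -> Y t i = y0 i + RInt (G i) 0 t.
Proof.
intros Hi. apply Rminus_diag_uniq. apply eps_zero. intros eps He.
set (T := Rabs t).
set (e' := eps / (2 * (1 + L * 7 * Rabs t))).
assert (Hd : 0 < 1 + L * 7 * Rabs t) by (pose proof (Rabs_pos t); nra).
assert (He' : 0 < e') by (unfold e'; apply Rdiv_lt_0_compat; lra).
destruct (tail_small2 T e' He') as [n [Hn1 Hn2]].
assert (H1 := Y_pic (S n) t i T Hi (Rle_refl _)).
change (pic (S (S n)) t i) with (y0 i + RInt (fun s => F (pic (S n) s) i) 0 t) in H1.
assert (H2 : Rabs (RInt (fun s => F (pic (S n) s) i - G i s) 0 t) <= (L * (7 * tail (S n) T)) * Rabs t ^ 1 / INR 1).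
{ apply int_bound. apply (@ex_RInt_minus R_NormedModule). apply pic_ex; auto. apply G_ex; auto.
  apply Rmult_le_pos. lra. apply Rmult_le_pos. lra. apply tail_nonneg.
  intros s Hs. simpl pow. rewrite Rmult_1_r. unfold G. eapply Rle_trans. apply Fl; auto.
  apply Rmult_le_compat_l; [lra|]. apply n7_bound. intros j Hj. unfold vsub.
  rewrite Rabs_minus_sym. apply Y_pic; auto. unfold T.
  destruct (Rle_or_lt 0 t). rewrite Rmin_left, Rmax_right in Hs by lra. rewrite Rabs_pos_eq, (Rabs_pos_eq t); lra.
  rewrite Rmin_right, Rmax_left in Hs by lra. rewrite Rabs_left1, (Rabs_left t); lra. }
rewrite (RInt_minus (V := R_CompleteNormedModule)) in H2; [|apply pic_ex; auto|apply G_ex; auto].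
change (minus (RInt (fun s => F (pic (S n) s) i) 0 t) (RInt (G i) 0 t)) with
  (RInt (fun s => F (pic (S n) s) i) 0 t - RInt (G i) 0 t) in H2.
replace (Y t i - (y0 i + RInt (G i) 0 t)) with
  ((Y t i - (y0 i + RInt (fun s => F (pic (S n) s) i) 0 t)) + (RInt (fun s => F (pic (S n) s) i) 0 t - RInt (G i) 0 t)) by ring.
eapply Rle_trans. apply Rabs_triang.
assert (Ht : tail (S n) T <= e') by lra.
assert (0 <= Rabs t) by apply Rabs_pos.
assert (L * (7 * tail (S n) T) * Rabs t ^ 1 / INR 1 <= L * 7 * Rabs t * e').
{ replace (L * (7 * tail (S n) T) * Rabs t ^ 1 / INR 1) with ((L * 7 * Rabs t) * tail (S n) T) by (simpl; field).
  apply Rmult_le_compat_l; nra. }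
assert (e' * (1 + L * 7 * Rabs t) = eps / 2) by (unfold e'; field; lra).
nra.
Qed.

Lemma Y_deriv i t : (1 <= i <= 7)%nat -> is_derive (fun s => Y s i) t (F (Y t) i).
Proof.
intros Hi.
apply (is_derive_ext (fun s => y0 i + RInt (G i) 0 s)). intros s; symmetry; apply Y_int; auto.
replace (F (Y t) i) with (0 + G i t) by (unfold G; ring).
apply (@is_derive_plus R_AbsRing R_NormedModule (fun _ => y0 i) (fun s => RInt (G i) 0 s)).
exact (@is_derive_const R_AbsRing R_NormedModule (y0 i) t).
apply (is_derive_RInt (G i) (fun s => RInt (G i) 0 s) 0 t).
apply filter_forall. intros b. apply (@RInt_correct R_CompleteNormedModule). apply G_ex; auto.
apply G_cont; auto.
Qed.

Lemma Y_0 i : Y 0 i = y0 i.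
Proof.
unfold Y. rewrite (Series_ext _ (fun k => 0 * 0)). rewrite Series_scal_l. ring.
intros k. destruct k; simpl; rewrite RInt_point; [|]; unfold zero; simpl; try ring.
rewrite RInt_point. unfold zero; simpl. ring.
Qed.
End Picard.

Theorem picard (F : vec7 -> vec7) (M L : R) (y0 : vec7) :
  0 <= M -> 0 < L ->
  (forall v i, (1 <= i <= 7)%nat -> Rabs (F v i) <= M) ->
  (forall v w i, (1 <= i <= 7)%nat -> Rabs (F v i - F w i) <= L * n7 (vsub v w)) ->
  exists Z : R -> vec7, (forall i, Z 0 i = y0 i) /\
    forall t i, (1 <= i <= 7)%nat -> is_derive (fun s => Z s i) t (F (Z t) i).
Proof.
intros HM HL Hb Hl. exists (Y F y0). split.
intros i; apply Y_0. intros t i Hi. apply (Y_deriv F M L HM HL Hb Hl); auto.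
Qed.

Definition wr (a2 b2 a3 b3 : R) := a2 * a3 - b2 * b3.
Definition wi (a2 b2 a3 b3 : R) := a2 * b3 + b2 * a3.
Definition pr (a1 b1 a2 b2 a3 b3 : R) := a1 * (a2 * a3 - b2 * b3) - b1 * (a2 * b3 + b2 * a3).
Definition pim (a1 b1 a2 b2 a3 b3 : R) := a1 * (a2 * b3 + b2 * a3) + b1 * (a2 * a3 - b2 * b3).

Definition ff (k : nat) (x a1 b1 a2 b2 a3 b3 : R) : R :=
  match k with
  | 1%nat => -3 * (a1 * (a2 * b3 + b2 * a3) + b1 * (a2 * a3 - b2 * b3))
  | 2%nat => a1 * ((a2 * a2 + b2 * b2) - (a3 * a3 + b3 * b3)) + x * (a2 * b3 + b2 * a3)
  | 3%nat => b1 * ((a2 * a2 + b2 * b2) - (a3 * a3 + b3 * b3)) + x * (a2 * a3 - b2 * b3)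
  | 4%nat => a2 * ((a3 * a3 + b3 * b3) - (a1 * a1 + b1 * b1)) + x * (a3 * b1 + b3 * a1)
  | 5%nat => b2 * ((a3 * a3 + b3 * b3) - (a1 * a1 + b1 * b1)) + x * (a3 * a1 - b3 * b1)
  | 6%nat => a3 * ((a1 * a1 + b1 * b1) - (a2 * a2 + b2 * b2)) + x * (a1 * b2 + b1 * a2)
  | 7%nat => b3 * ((a1 * a1 + b1 * b1) - (a2 * a2 + b2 * b2)) + x * (a1 * a2 - b1 * b2)
  | _ => 0
  end.

Definition FF (v : vec7) : vec7 := fun i =>
  ff i (v 1%nat) (v 2%nat) (v 3%nat) (v 4%nat) (v 5%nat) (v 6%nat) (v 7%nat).

Definition Qn (x a1 b1 a2 b2 a3 b3 : R) := x*x + a1*a1 + b1*b1 + a2*a2 + b2*b2 + a3*a3 + b3*b3.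

Lemma ff_orth x a1 b1 a2 b2 a3 b3 :
  x * ff 1 x a1 b1 a2 b2 a3 b3 + a1 * ff 2 x a1 b1 a2 b2 a3 b3 + b1 * ff 3 x a1 b1 a2 b2 a3 b3 +
  a2 * ff 4 x a1 b1 a2 b2 a3 b3 + b2 * ff 5 x a1 b1 a2 b2 a3 b3 +
  a3 * ff 6 x a1 b1 a2 b2 a3 b3 + b3 * ff 7 x a1 b1 a2 b2 a3 b3 = 0.
Proof. simpl. ring. Qed.

Definition LB (h : vec7 -> R) := exists B Lc, 0 <= B /\ 0 <= Lc /\ (forall v, Rabs (h v) <= B) /\
  (forall v w, Rabs (h v - h w) <= Lc * n7 (vsub v w)).

Definition cl (K y : R) := Rmax (-K) (Rmin K y).

Lemma cl_lip K x y : 0 <= K -> Rabs (cl K x - cl K y) <= Rabs (x - y).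
Proof. intros HK. unfold cl, Rmax, Rmin. repeat destruct Rle_dec; split_Rabs; lra. Qed.

Lemma cl_bound K x : 0 <= K -> Rabs (cl K x) <= K.
Proof. intros HK. unfold cl, Rmax, Rmin. repeat destruct Rle_dec; split_Rabs; lra. Qed.

Lemma cl_id K x : Rabs x <= K -> cl K x = x.
Proof. intros H. unfold cl, Rmax, Rmin. repeat destruct Rle_dec; split_Rabs; lra. Qed.

Lemma LB_const c : LB (fun _ => c).
Proof. exists (Rabs c), 0. split; [apply Rabs_pos|split; [lra|split]]. intros; lra.
intros. unfold Rminus. rewrite Rplus_opp_r, Rabs_R0. pose proof (n7_comp (vsub v w) 1 ltac:(lia)). 
pose proof (Rabs_pos (vsub v w 1%nat)). lra. Qed.

Lemma LB_cl K j : 0 <= K -> (1 <= j <= 7)%nat -> LB (fun v => cl K (v j)).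
Proof. intros HK Hj. exists K, 1. split; [lra|split; [lra|split]]. intros; apply cl_bound; auto.
intros v w. eapply Rle_trans. apply cl_lip; auto. rewrite Rmult_1_l. apply (n7_comp (vsub v w) j Hj). Qed.

Lemma LB_plus f g : LB f -> LB g -> LB (fun v => f v + g v).
Proof. intros [B1 [L1 [? [? [? ?]]]]] [B2 [L2 [? [? [? ?]]]]]. exists (B1 + B2), (L1 + L2).
split; [lra|split; [lra|split]]. intros v. eapply Rle_trans. apply Rabs_triang. specialize (H1 v); specialize (H5 v); lra.
intros v w. replace (f v + g v - (f w + g w)) with ((f v - f w) + (g v - g w)) by ring.
eapply Rle_trans. apply Rabs_triang. specialize (H2 v w); specialize (H6 v w); lra. Qed.

Lemma LB_opp f : LB f -> LB (fun v => - f v).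
Proof. intros [B1 [L1 [? [? [? ?]]]]]. exists B1, L1. split; [lra|split; [lra|split]].
intros v; rewrite Rabs_Ropp; auto. intros v w. replace (- f v - - f w) with (- (f v - f w)) by ring.
rewrite Rabs_Ropp; auto. Qed.

Lemma LB_minus f g : LB f -> LB g -> LB (fun v => f v - g v).
Proof. intros Hf Hg. apply (LB_plus f (fun v => - g v)); auto. apply LB_opp; auto. Qed.

Lemma LB_mult f g : LB f -> LB g -> LB (fun v => f v * g v).
Proof. intros [B1 [L1 [? [? [? ?]]]]] [B2 [L2 [? [? [? ?]]]]]. exists (B1 * B2), (B1 * L2 + B2 * L1).
split; [nra|split; [nra|split]]. intros v. rewrite Rabs_mult. specialize (H1 v); specialize (H5 v).
pose proof (Rabs_pos (f v)); pose proof (Rabs_pos (g v)); nra.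
intros v w. replace (f v * g v - f w * g w) with (f v * (g v - g w) + g w * (f v - f w)) by ring.
eapply Rle_trans. apply Rabs_triang. rewrite !Rabs_mult.
specialize (H1 v); specialize (H5 w); specialize (H2 v w); specialize (H6 v w).
pose proof (Rabs_pos (f v)); pose proof (Rabs_pos (g w)); pose proof (Rabs_pos (g v - g w)); pose proof (Rabs_pos (f v - f w)).
pose proof (n7_comp (vsub v w) 1 ltac:(lia)). pose proof (Rabs_pos (vsub v w 1%nat)).
assert (0 <= n7 (vsub v w)) by lra.
apply Rle_trans with (B1 * (L2 * n7 (vsub v w)) + B2 * (L1 * n7 (vsub v w))).
apply Rplus_le_compat; apply Rmult_le_compat; auto. nra. Qed.

Ltac lb := repeat match goal with
 | |- LB (fun _ => ?c) => apply LB_const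
 | |- LB (fun v => @?f v + @?g v) => apply (LB_plus f g)
 | |- LB (fun v => @?f v - @?g v) => apply (LB_minus f g)
 | |- LB (fun v => @?f v * @?g v) => apply (LB_mult f g)
 | |- LB (fun v => - @?f v) => apply (LB_opp f)
 | |- LB (fun v => cl ?K (v ?j)) => apply LB_cl; [assumption|lia]
 end.

Definition clv (K : R) (v : vec7) : vec7 := fun j => cl K (v j).
Definition Ftr (K : R) (v : vec7) : vec7 := FF (clv K v).

Lemma Ftr_LB K i : 0 <= K -> (1 <= i <= 7)%nat -> LB (fun v => Ftr K v i).
Proof.
intros HK Hi. unfold Ftr, FF, clv.
assert (i = 1 \/ i = 2 \/ i = 3 \/ i = 4 \/ i = 5 \/ i = 6 \/ i = 7)%nat as Hc by lia.
destruct Hc as [->|[->|[->|[->|[->|[->| ->]]]]]]; unfold ff; lb.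
Qed.

Lemma LB7 (F : vec7 -> vec7) : (forall i, (1 <= i <= 7)%nat -> LB (fun v => F v i)) ->
  exists M L, 0 <= M /\ 0 < L /\ (forall v i, (1 <= i <= 7)%nat -> Rabs (F v i) <= M) /\
    (forall v w i, (1 <= i <= 7)%nat -> Rabs (F v i - F w i) <= L * n7 (vsub v w)).
Proof.
intros H.
destruct (H 1%nat ltac:(lia)) as [B1 [L1 [? [? [? ?]]]]].
destruct (H 2%nat ltac:(lia)) as [B2 [L2 [? [? [? ?]]]]].
destruct (H 3%nat ltac:(lia)) as [B3 [L3 [? [? [? ?]]]]].
destruct (H 4%nat ltac:(lia)) as [B4 [L4 [? [? [? ?]]]]].
destruct (H 5%nat ltac:(lia)) as [B5 [L5 [? [? [? ?]]]]].
destruct (H 6%nat ltac:(lia)) as [B6 [L6 [? [? [? ?]]]]].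
destruct (H 7%nat ltac:(lia)) as [B7 [L7 [? [? [? ?]]]]].
exists (B1+B2+B3+B4+B5+B6+B7), (L1+L2+L3+L4+L5+L6+L7+1).
split; [lra|split; [lra|split]].
- intros v i Hi. assert (i = 1 \/ i = 2 \/ i = 3 \/ i = 4 \/ i = 5 \/ i = 6 \/ i = 7)%nat as Hc by lia.
  destruct Hc as [->|[->|[->|[->|[->|[->| ->]]]]]];
  [specialize (H2 v)|specialize (H6 v)|specialize (H10 v)|specialize (H14 v)|specialize (H18 v)|specialize (H22 v)|specialize (H26 v)]; lra.
- intros v w i Hi. pose proof (n7_comp (vsub v w) 1 ltac:(lia)). pose proof (Rabs_pos (vsub v w 1%nat)).
  assert (0 <= n7 (vsub v w)) by lra.
  assert (i = 1 \/ i = 2 \/ i = 3 \/ i = 4 \/ i = 5 \/ i = 6 \/ i = 7)%nat as Hc by lia.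
  destruct Hc as [->|[->|[->|[->|[->|[->| ->]]]]]];
  [specialize (H3 v w)|specialize (H7 v w)|specialize (H11 v w)|specialize (H15 v w)|specialize (H19 v w)|specialize (H23 v w)|specialize (H27 v w)]; nra.
Qed.

Lemma gronwall (u du : R -> R) c a : 0 <= c -> (forall t, is_derive u t (du t)) ->
  (forall t, 0 <= u t) -> (forall t, Rabs (du t) <= c * u t) -> u a = 0 -> forall t, u t = 0.
Proof.
intros Hc Hd Hp Hb Ha t.
destruct (Rle_or_lt a t) as [Ht|Ht].
- set (g := fun s => u s * exp (- c * s)).
  set (dg := fun s => (du s - c * u s) * exp (- c * s)).
  assert (Hg : forall s, is_derive g s (dg s)).
  { intros s. unfold g, dg. auto_derive. exists (du s). auto.
    replace (Derive (fun x : R => u x) s) with (du s) by (symmetry; apply is_derive_unique; apply Hd). ring. }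
  destruct (MVT_cor4 g dg a (Rabs (t - a)) (fun s _ => Hg s) t (Rle_refl _)) as [xi [E _]].
  assert (dg xi <= 0).
  { unfold dg. apply Rmult_le_0_r. specialize (Hb xi). apply Rabs_le_between in Hb. lra. left; apply exp_pos. }
  assert (g t <= 0). { assert (g a = 0) by (unfold g; rewrite Ha; ring). nra. }
  unfold g in H0. assert (0 < exp (- c * t)) by apply exp_pos. specialize (Hp t). nra.
- set (g := fun s => u s * exp (c * s)).
  set (dg := fun s => (du s + c * u s) * exp (c * s)).
  assert (Hg : forall s, is_derive g s (dg s)).
  { intros s. unfold g, dg. auto_derive. exists (du s). auto.
    replace (Derive (fun x : R => u x) s) with (du s) by (symmetry; apply is_derive_unique; apply Hd). ring. }
  destruct (MVT_cor4 g dg a (Rabs (t - a)) (fun s _ => Hg s) t (Rle_refl _)) as [xi [E _]].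
  assert (0 <= dg xi).
  { unfold dg. apply Rmult_le_pos. specialize (Hb xi). apply Rabs_le_between in Hb. lra. left; apply exp_pos. }
  assert (g t <= 0). { assert (g a = 0) by (unfold g; rewrite Ha; ring). nra. }
  unfold g in H0. assert (0 < exp (c * t)) by apply exp_pos. specialize (Hp t). nra.
Qed.

Lemma deriv0_const (f : R -> R) : (forall t, is_derive f t 0) -> forall t, f t = f 0.
Proof.
intros H t. destruct (MVT_cor4 f (fun _ => 0) 0 (Rabs (t - 0)) (fun s _ => H s) t (Rle_refl _)) as [xi [E _]].
lra.
Qed.

Lemma der_u (f1 f2 f3 f4 f5 f6 f7 : R -> R) d1 d2 d3 d4 d5 d6 d7 Q0 t :
  is_derive f1 t d1 -> is_derive f2 t d2 -> is_derive f3 t d3 -> is_derive f4 t d4 ->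
  is_derive f5 t d5 -> is_derive f6 t d6 -> is_derive f7 t d7 ->
  is_derive (fun s => (Qn (f1 s) (f2 s) (f3 s) (f4 s) (f5 s) (f6 s) (f7 s) - Q0) ^ 2) t
    (2 * (Qn (f1 t) (f2 t) (f3 t) (f4 t) (f5 t) (f6 t) (f7 t) - Q0) *
     (2 * (f1 t * d1 + f2 t * d2 + f3 t * d3 + f4 t * d4 + f5 t * d5 + f6 t * d6 + f7 t * d7))).
Proof.
intros H1 H2 H3 H4 H5 H6 H7. unfold Qn. auto_derive.
repeat split; eexists; eassumption.
replace (Derive (fun x : R => f1 x) t) with d1 by (symmetry; apply is_derive_unique; auto).
replace (Derive (fun x : R => f2 x) t) with d2 by (symmetry; apply is_derive_unique; auto).
replace (Derive (fun x : R => f3 x) t) with d3 by (symmetry; apply is_derive_unique; auto).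
replace (Derive (fun x : R => f4 x) t) with d4 by (symmetry; apply is_derive_unique; auto).
replace (Derive (fun x : R => f5 x) t) with d5 by (symmetry; apply is_derive_unique; auto).
replace (Derive (fun x : R => f6 x) t) with d6 by (symmetry; apply is_derive_unique; auto).
replace (Derive (fun x : R => f7 x) t) with d7 by (symmetry; apply is_derive_unique; auto).
ring.
Qed.

Lemma cl_dev Q0 Q y : 0 <= Q0 -> y * y <= Q -> Rabs (y - cl (Q0 + 1) y) <= 3 * Rabs (Q - Q0).
Proof.
intros HQ0 Hy. destruct (Rle_or_lt (Rabs y) (Q0 + 1)) as [H|H].
- rewrite cl_id by auto. unfold Rminus at 1. rewrite Rplus_opp_r, Rabs_R0. pose proof (Rabs_pos (Q - Q0)); lra.
- assert (Habs : Rabs (y - cl (Q0 + 1) y) <= Rabs y).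
  { unfold cl, Rmax, Rmin. repeat destruct Rle_dec; split_Rabs; lra. }
  assert (E : y * y = Rabs y * Rabs y) by (rewrite <- Rabs_mult; rewrite Rabs_pos_eq; nra).
  assert (Hq : Q - Q0 > 0) by nra.
  rewrite (Rabs_pos_eq (Q - Q0)) by lra. nra.
Qed.

Lemma Rabs7 a1 a2 a3 a4 a5 a6 a7 : Rabs (a1 + a2 + a3 + a4 + a5 + a6 + a7) <=
  Rabs a1 + Rabs a2 + Rabs a3 + Rabs a4 + Rabs a5 + Rabs a6 + Rabs a7.
Proof.
repeat (eapply Rle_trans; [apply Rabs_triang|apply Rplus_le_compat_r]). lra.
Qed.

Lemma term_bound y c F M D : Rabs (y - c) <= 3 * D -> Rabs F <= M -> 0 <= D ->
  Rabs ((y - c) * F) <= 3 * D * M.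
Proof. intros H1 H2 H3. rewrite Rabs_mult. apply Rmult_le_compat; auto; apply Rabs_pos. Qed.

Lemma dev_core y1 y2 y3 y4 y5 y6 y7 c1 c2 c3 c4 c5 c6 c7 F1 F2 F3 F4 F5 F6 F7 M D :
  c1 * F1 + c2 * F2 + c3 * F3 + c4 * F4 + c5 * F5 + c6 * F6 + c7 * F7 = 0 -> 0 <= D ->
  Rabs (y1 - c1) <= 3 * D -> Rabs (y2 - c2) <= 3 * D -> Rabs (y3 - c3) <= 3 * D -> Rabs (y4 - c4) <= 3 * D ->
  Rabs (y5 - c5) <= 3 * D -> Rabs (y6 - c6) <= 3 * D -> Rabs (y7 - c7) <= 3 * D ->
  Rabs F1 <= M -> Rabs F2 <= M -> Rabs F3 <= M -> Rabs F4 <= M -> Rabs F5 <= M -> Rabs F6 <= M -> Rabs F7 <= M ->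
  Rabs (y1 * F1 + y2 * F2 + y3 * F3 + y4 * F4 + y5 * F5 + y6 * F6 + y7 * F7) <= 21 * M * D.
Proof.
intros Ho HD H1 H2 H3 H4 H5 H6 H7 G1 G2 G3 G4 G5 G6 G7.
replace (y1 * F1 + y2 * F2 + y3 * F3 + y4 * F4 + y5 * F5 + y6 * F6 + y7 * F7)
  with ((y1 - c1) * F1 + (y2 - c2) * F2 + (y3 - c3) * F3 + (y4 - c4) * F4 +
        (y5 - c5) * F5 + (y6 - c6) * F6 + (y7 - c7) * F7) by lra.
eapply Rle_trans. apply Rabs7.
pose proof (term_bound _ _ _ _ _ H1 G1 HD). pose proof (term_bound _ _ _ _ _ H2 G2 HD).
pose proof (term_bound _ _ _ _ _ H3 G3 HD). pose proof (term_bound _ _ _ _ _ H4 G4 HD).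
pose proof (term_bound _ _ _ _ _ H5 G5 HD). pose proof (term_bound _ _ _ _ _ H6 G6 HD).
pose proof (term_bound _ _ _ _ _ H7 G7 HD). lra.
Qed.

Lemma dev_sum K Q0 v M : 0 <= Q0 -> K = Q0 + 1 ->
  (forall i, (1 <= i <= 7)%nat -> Rabs (FF (clv K v) i) <= M) ->
  Rabs (v 1%nat * Ftr K v 1%nat + v 2%nat * Ftr K v 2%nat + v 3%nat * Ftr K v 3%nat + v 4%nat * Ftr K v 4%nat
        + v 5%nat * Ftr K v 5%nat + v 6%nat * Ftr K v 6%nat + v 7%nat * Ftr K v 7%nat)
  <= 21 * M * Rabs (Qn (v 1%nat) (v 2%nat) (v 3%nat) (v 4%nat) (v 5%nat) (v 6%nat) (v 7%nat) - Q0).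
Proof.
intros HQ0 HK HM.
assert (Hsq : forall a, 0 <= a * a) by (intros; nra).
assert (Hc : forall j, (1 <= j <= 7)%nat -> Rabs (v j - clv K v j) <= 3 * Rabs (Qn (v 1%nat) (v 2%nat) (v 3%nat) (v 4%nat) (v 5%nat) (v 6%nat) (v 7%nat) - Q0)).
{ intros j Hj. unfold clv. rewrite HK. apply cl_dev; auto. unfold Qn.
  pose proof (Hsq (v 1%nat)); pose proof (Hsq (v 2%nat)); pose proof (Hsq (v 3%nat)); pose proof (Hsq (v 4%nat));
  pose proof (Hsq (v 5%nat)); pose proof (Hsq (v 6%nat)); pose proof (Hsq (v 7%nat)).
  assert (j = 1 \/ j = 2 \/ j = 3 \/ j = 4 \/ j = 5 \/ j = 6 \/ j = 7)%nat as Hj' by lia.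
  destruct Hj' as [->|[->|[->|[->|[->|[->| ->]]]]]]; lra. }
apply (dev_core _ _ _ _ _ _ _ (clv K v 1%nat) (clv K v 2%nat) (clv K v 3%nat) (clv K v 4%nat) (clv K v 5%nat) (clv K v 6%nat) (clv K v 7%nat)).
- unfold Ftr, FF. apply ff_orth.
- apply Rabs_pos.
- apply Hc; lia.  - apply Hc; lia.  - apply Hc; lia.  - apply Hc; lia.
- apply Hc; lia.  - apply Hc; lia.  - apply Hc; lia.
- apply HM; lia.  - apply HM; lia.  - apply HM; lia.  - apply HM; lia.
- apply HM; lia.  - apply HM; lia.  - apply HM; lia.
Qed.

Lemma exist_real (y0 : vec7) : exists Z : R -> vec7, (forall i, Z 0 i = y0 i) /\
  forall t i, (1 <= i <= 7)%nat -> is_derive (fun s => Z s i) t (FF (Z t) i).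
Proof.
set (Q0 := Qn (y0 1%nat) (y0 2%nat) (y0 3%nat) (y0 4%nat) (y0 5%nat) (y0 6%nat) (y0 7%nat)).
assert (HQ0 : 0 <= Q0) by (unfold Q0, Qn; nra).
set (K := Q0 + 1). assert (HK : 0 <= K) by (unfold K; lra).
destruct (LB7 (Ftr K)) as [M [L [HM [HL [Hb Hl]]]]]. intros i Hi; apply Ftr_LB; auto.
destruct (picard (Ftr K) M L y0 HM HL Hb Hl) as [Z [HZ0 HZd]].
set (u := fun s => (Qn (Z s 1%nat) (Z s 2%nat) (Z s 3%nat) (Z s 4%nat) (Z s 5%nat) (Z s 6%nat) (Z s 7%nat) - Q0) ^ 2).
set (du := fun s => 2 * (Qn (Z s 1%nat) (Z s 2%nat) (Z s 3%nat) (Z s 4%nat) (Z s 5%nat) (Z s 6%nat) (Z s 7%nat) - Q0) *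
     (2 * (Z s 1%nat * Ftr K (Z s) 1%nat + Z s 2%nat * Ftr K (Z s) 2%nat + Z s 3%nat * Ftr K (Z s) 3%nat +
           Z s 4%nat * Ftr K (Z s) 4%nat + Z s 5%nat * Ftr K (Z s) 5%nat + Z s 6%nat * Ftr K (Z s) 6%nat +
           Z s 7%nat * Ftr K (Z s) 7%nat))).
assert (Hu : forall t, u t = 0).
{ apply (gronwall u du (84 * M) 0).
  - lra.
  - intros t. unfold u, du. apply der_u; apply HZd; lia.
  - intros t. unfold u. apply pow2_ge_0.
  - intros t. unfold du, u.
    set (Q := Qn (Z t 1%nat) (Z t 2%nat) (Z t 3%nat) (Z t 4%nat) (Z t 5%nat) (Z t 6%nat) (Z t 7%nat)).
    assert (Hd := dev_sum K Q0 (Z t) M HQ0 eq_refl (fun i Hi => Hb (Z t) i Hi)). fold Q in Hd.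
    rewrite Rabs_mult, Rabs_mult, Rabs_mult. rewrite (Rabs_pos_eq 2) by lra.
    assert (E2 : (Q - Q0)^2 = Rabs (Q - Q0) * Rabs (Q - Q0)) by (rewrite <- Rabs_mult; rewrite Rabs_pos_eq; [ring|apply Rle_0_sqr]). rewrite E2. set (S := Rabs (Z t 1%nat * Ftr K (Z t) 1%nat + Z t 2%nat * Ftr K (Z t) 2%nat + Z t 3%nat * Ftr K (Z t) 3%nat + Z t 4%nat * Ftr K (Z t) 4%nat + Z t 5%nat * Ftr K (Z t) 5%nat + Z t 6%nat * Ftr K (Z t) 6%nat + Z t 7%nat * Ftr K (Z t) 7%nat)) in *. set (D := Rabs (Q - Q0)) in *. pose proof (Rabs_pos (Q - Q0)). fold D in H. nra.
  - unfold u. rewrite !HZ0. fold Q0. ring. }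
exists Z. split; auto. intros t i Hi.
assert (HQ : Qn (Z t 1%nat) (Z t 2%nat) (Z t 3%nat) (Z t 4%nat) (Z t 5%nat) (Z t 6%nat) (Z t 7%nat) = Q0).
{ specialize (Hu t). unfold u in Hu. simpl in Hu. rewrite Rmult_1_r in Hu. apply Rmult_integral in Hu. lra. }
assert (Hcl : forall j, (1 <= j <= 7)%nat -> cl K (Z t j) = Z t j).
{ intros j Hj. apply cl_id. unfold K.
  assert (Hj2 : Z t j * Z t j <= Q0).
  { rewrite <- HQ. unfold Qn.
    assert (Hsq : forall a, 0 <= a * a) by (intros; nra).
    pose proof (Hsq (Z t 1%nat)); pose proof (Hsq (Z t 2%nat)); pose proof (Hsq (Z t 3%nat)); pose proof (Hsq (Z t 4%nat));
    pose proof (Hsq (Z t 5%nat)); pose proof (Hsq (Z t 6%nat)); pose proof (Hsq (Z t 7%nat)).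
    assert (j = 1 \/ j = 2 \/ j = 3 \/ j = 4 \/ j = 5 \/ j = 6 \/ j = 7)%nat as Hj' by lia.
    destruct Hj' as [->|[->|[->|[->|[->|[->| ->]]]]]]; lra. }
  assert (E : Z t j * Z t j = Rabs (Z t j) * Rabs (Z t j)) by (rewrite <- Rabs_mult; rewrite Rabs_pos_eq; nra).
  pose proof (Rabs_pos (Z t j)). nra. }
assert (E : Ftr K (Z t) i = FF (Z t) i).
{ unfold Ftr, FF, clv. rewrite !Hcl by lia. reflexivity. }
rewrite <- E. apply HZd; auto.
Qed.

Lemma derC_comp (f : R -> C) t l :
  is_derive f t l -> is_derive (fun s => fst (f s)) t (fst l) /\ is_derive (fun s => snd (f s)) t (snd l).
Proof.
intro H. split.
- apply (filterdiff_comp' f (fun x : C => fst x) t (fun y => scal y l) (fun x : C => fst x)) in H.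
  + exact H.
  + apply filterdiff_linear. apply is_linear_fst.
- apply (filterdiff_comp' f (fun x : C => snd x) t (fun y => scal y l) (fun x : C => snd x)) in H.
  + exact H.
  + apply filterdiff_linear. apply is_linear_snd.
Qed.

Lemma derC_pair (f g : R -> R) t a b :
  is_derive f t a -> is_derive g t b -> is_derive (fun s => (f s, g s) : C) t (a, b).
Proof.
intros Ha Hb. unfold is_derive in *.
apply (filterdiff_comp'_2 f g (fun u v => (u,v) : C) t _ _ (fun u v => (u,v) : C) Ha Hb).
apply filterdiff_linear. apply (is_linear_ext (fun x => x)). intros [u v]; reflexivity. apply is_linear_id.
Qed.

Lemma Cmod_sq (z : C) : Cmod z ^ 2 = fst z * fst z + snd z * snd z.
Proof. unfold Cmod. rewrite pow2_sqrt. ring. nra. Qed.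

Definition rhsC (x : R) (z1 z2 z3 : C) : C :=
  Cplus (Cmult z1 (RtoC (Cmod z2 ^ 2 - Cmod z3 ^ 2))) (Cmult (Cmult Ci (RtoC x)) (Cconj (Cmult z2 z3))).

Lemma rhsC_1 x z1 z2 z3 : rhsC x z1 z2 z3 =
  (ff 2 x (fst z1) (snd z1) (fst z2) (snd z2) (fst z3) (snd z3),
   ff 3 x (fst z1) (snd z1) (fst z2) (snd z2) (fst z3) (snd z3)).
Proof. unfold rhsC. rewrite !Cmod_sq. destruct z1, z2, z3. unfold Cplus, Cmult, Cconj, RtoC, Ci; simpl. f_equal; ring. Qed.

Lemma rhsC_2 x z1 z2 z3 : rhsC x z2 z3 z1 =
  (ff 4 x (fst z1) (snd z1) (fst z2) (snd z2) (fst z3) (snd z3),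
   ff 5 x (fst z1) (snd z1) (fst z2) (snd z2) (fst z3) (snd z3)).
Proof. unfold rhsC. rewrite !Cmod_sq. destruct z1, z2, z3. unfold Cplus, Cmult, Cconj, RtoC, Ci; simpl. f_equal; ring. Qed.

Lemma rhsC_3 x z1 z2 z3 : rhsC x z3 z1 z2 =
  (ff 6 x (fst z1) (snd z1) (fst z2) (snd z2) (fst z3) (snd z3),
   ff 7 x (fst z1) (snd z1) (fst z2) (snd z2) (fst z3) (snd z3)).
Proof. unfold rhsC. rewrite !Cmod_sq. destruct z1, z2, z3. unfold Cplus, Cmult, Cconj, RtoC, Ci; simpl. f_equal; ring. Qed.

Lemma rhsx z1 z2 z3 : -3 * Im (Cmult (Cmult z1 z2) z3) =
  ff 1 0 (fst z1) (snd z1) (fst z2) (snd z2) (fst z3) (snd z3).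
Proof. destruct z1, z2, z3. unfold Cmult, Im; simpl. ring. Qed.

Lemma ff1_x k x x' a1 b1 a2 b2 a3 b3 : k = 1%nat -> ff k x a1 b1 a2 b2 a3 b3 = ff k x' a1 b1 a2 b2 a3 b3.
Proof. intros ->. reflexivity. Qed.

Definition st (x1 : R -> R) (z1 z2 z3 : R -> C) (t : R) : vec7 := embed (x1 t) (z1 t) (z2 t) (z3 t).

Lemma glob_iff_real x1 z1 z2 z3 :
  is_global_solution x1 z1 z2 z3 <->
  forall t i, (1 <= i <= 7)%nat -> is_derive (fun s => st x1 z1 z2 z3 s i) t (FF (st x1 z1 z2 z3 t) i).
Proof.
split.
- intros H t i Hi. destruct (H t) as [Hx [H1 [H2 H3]]].
  fold (rhsC (x1 t) (z1 t) (z2 t) (z3 t)) in H1.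
  fold (rhsC (x1 t) (z2 t) (z3 t) (z1 t)) in H2.
  fold (rhsC (x1 t) (z3 t) (z1 t) (z2 t)) in H3.
  rewrite rhsC_1 in H1. rewrite rhsC_2 in H2. rewrite rhsC_3 in H3.
  apply derC_comp in H1. apply derC_comp in H2. apply derC_comp in H3.
  rewrite rhsx in Hx.
  assert (i = 1 \/ i = 2 \/ i = 3 \/ i = 4 \/ i = 5 \/ i = 6 \/ i = 7)%nat as Hc by lia.
  unfold st, FF, embed, Re, Im.
  destruct Hc as [->|[->|[->|[->|[->|[->| ->]]]]]]; simpl fst; simpl snd; try tauto.
- intros H t. unfold is_global_solution.
  fold (rhsC (x1 t) (z1 t) (z2 t) (z3 t)).
  fold (rhsC (x1 t) (z2 t) (z3 t) (z1 t)).
  fold (rhsC (x1 t) (z3 t) (z1 t) (z2 t)).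
  rewrite rhsC_1, rhsC_2, rhsC_3, rhsx.
  assert (Hd := fun i Hi => H t i Hi). unfold st, FF, embed, Re, Im in Hd.
  pose proof (Hd 1%nat ltac:(lia)) as D1; pose proof (Hd 2%nat ltac:(lia)) as D2; pose proof (Hd 3%nat ltac:(lia)) as D3;
  pose proof (Hd 4%nat ltac:(lia)) as D4; pose proof (Hd 5%nat ltac:(lia)) as D5; pose proof (Hd 6%nat ltac:(lia)) as D6;
  pose proof (Hd 7%nat ltac:(lia)) as D7. simpl in D1, D2, D3, D4, D5, D6, D7.
  split; [|split; [|split]].
  + exact D1.
  + apply (is_derive_ext (fun s => (fst (z1 s), snd (z1 s)) : C)). intros s; destruct (z1 s); reflexivity.
    apply derC_pair; auto.
  + apply (is_derive_ext (fun s => (fst (z2 s), snd (z2 s)) : C)). intros s; destruct (z2 s); reflexivity.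
    apply derC_pair; auto.
  + apply (is_derive_ext (fun s => (fst (z3 s), snd (z3 s)) : C)). intros s; destruct (z3 s); reflexivity.
    apply derC_pair; auto.
Qed.

Definition sol7 (f : nat -> R -> R) := forall t k, (1 <= k <= 7)%nat ->
  is_derive (f k) t (ff k (f 1%nat t) (f 2%nat t) (f 3%nat t) (f 4%nat t) (f 5%nat t) (f 6%nat t) (f 7%nat t)).

Ltac exd H := repeat match goal with
  | |- _ /\ _ => split
  | |- True => exact I
  | |- ex_derive _ _ => eexists; apply H; lia
  end.

Ltac subst_der H := repeat match goal with
  | |- context [Derive (fun x : R => ?f ?k x) ?t] =>
     change (Derive (fun x : R => f k x) t) with (Derive (f k) t);
     rewrite (is_derive_unique (f k) t _ (H t k ltac:(lia)))
  end.

Section Sol.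
Variable f : nat -> R -> R.
Hypothesis Hf : sol7 f.

Lemma pr_const t : pr (f 2%nat t) (f 3%nat t) (f 4%nat t) (f 5%nat t) (f 6%nat t) (f 7%nat t) =
                   pr (f 2%nat 0) (f 3%nat 0) (f 4%nat 0) (f 5%nat 0) (f 6%nat 0) (f 7%nat 0).
Proof.
apply (deriv0_const (fun s => pr (f 2%nat s) (f 3%nat s) (f 4%nat s) (f 5%nat s) (f 6%nat s) (f 7%nat s))).
intros s. unfold pr. auto_derive. exd Hf. subst_der Hf. simpl. ring.
Qed.

Lemma Qn_const t : Qn (f 1%nat t) (f 2%nat t) (f 3%nat t) (f 4%nat t) (f 5%nat t) (f 6%nat t) (f 7%nat t) =
                   Qn (f 1%nat 0) (f 2%nat 0) (f 3%nat 0) (f 4%nat 0) (f 5%nat 0) (f 6%nat 0) (f 7%nat 0).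
Proof.
apply (deriv0_const (fun s => Qn (f 1%nat s) (f 2%nat s) (f 3%nat s) (f 4%nat s) (f 5%nat s) (f 6%nat s) (f 7%nat s))).
intros s. unfold Qn. auto_derive. exd Hf. subst_der Hf. simpl. ring.
Qed.
End Sol.

Lemma ab2 a b : Rabs (a * b) <= (a * a + b * b) / 2.
Proof. pose proof (Rle_0_sqr (a - b)); pose proof (Rle_0_sqr (a + b)); unfold Rsqr in *; split_Rabs; nra. Qed.

Lemma mono_bound x p q r : Rabs (x * p * q * r) <= ((x * x + r * r) / 2) * ((p * p + q * q) / 2).
Proof.
replace (x * p * q * r) with ((x * r) * (p * q)) by ring. rewrite Rabs_mult.
apply Rmult_le_compat; try apply Rabs_pos; apply ab2.
Qed.

Lemma pair_alg x a1 b1 a2 b2 a3 b3 :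
  Rabs (2 * (a1 * ff 2 x a1 b1 a2 b2 a3 b3 + b1 * ff 3 x a1 b1 a2 b2 a3 b3 +
             a2 * ff 4 x a1 b1 a2 b2 a3 b3 + b2 * ff 5 x a1 b1 a2 b2 a3 b3))
  <= 6 * Qn x a1 b1 a2 b2 a3 b3 * (a1 * a1 + b1 * b1 + a2 * a2 + b2 * b2).
Proof.
set (A := a1 * a1 + b1 * b1). set (B := a2 * a2 + b2 * b2).
set (Q := Qn x a1 b1 a2 b2 a3 b3).
assert (Hsq : forall a, 0 <= a * a) by (intros; nra).
pose proof (Hsq x); pose proof (Hsq a1); pose proof (Hsq b1); pose proof (Hsq a2); pose proof (Hsq b2);
pose proof (Hsq a3); pose proof (Hsq b3).
assert (E : 2 * (a1 * ff 2 x a1 b1 a2 b2 a3 b3 + b1 * ff 3 x a1 b1 a2 b2 a3 b3 +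
             a2 * ff 4 x a1 b1 a2 b2 a3 b3 + b2 * ff 5 x a1 b1 a2 b2 a3 b3) =
  2 * (A * ((a2 * a2 + b2 * b2) - (a3 * a3 + b3 * b3))) + 2 * (B * ((a3 * a3 + b3 * b3) - (a1 * a1 + b1 * b1)))
  + 4 * (x * a1 * a2 * b3 + x * a1 * b2 * a3 + x * b1 * a2 * a3 - x * b1 * b2 * b3)).
{ unfold A, B. simpl. ring. }
rewrite E.
pose proof (mono_bound x a1 a2 b3). pose proof (mono_bound x a1 b2 a3).
pose proof (mono_bound x b1 a2 a3). pose proof (mono_bound x b1 b2 b3).
assert (HQ : Q = x * x + a1 * a1 + b1 * b1 + a2 * a2 + b2 * b2 + a3 * a3 + b3 * b3) by reflexivity.
assert (Hm : Rabs (x * a1 * a2 * b3 + x * a1 * b2 * a3 + x * b1 * a2 * a3 - x * b1 * b2 * b3) <= Q * (A + B)).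
{ eapply Rle_trans. unfold Rminus. apply Rabs_triang. rewrite Rabs_Ropp.
  eapply Rle_trans. apply Rplus_le_compat_r. eapply Rle_trans. apply Rabs_triang.
  apply Rplus_le_compat_r. apply Rabs_triang.
  assert (Hcd : forall c d, 0 <= c -> 0 <= d -> c <= Q -> d <= A + B -> (c / 2) * (d / 2) <= Q * (A + B) / 4).
  { intros c d Hc Hd Hc' Hd'. assert (c * d <= Q * (A + B)) by (apply Rmult_le_compat; lra). lra. }
  assert (((x * x + b3 * b3) / 2) * ((a1 * a1 + a2 * a2) / 2) <= Q * (A + B) / 4) by (apply Hcd; unfold A, B; lra).
  assert (((x * x + a3 * a3) / 2) * ((a1 * a1 + b2 * b2) / 2) <= Q * (A + B) / 4) by (apply Hcd; unfold A, B; lra).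
  assert (((x * x + a3 * a3) / 2) * ((b1 * b1 + a2 * a2) / 2) <= Q * (A + B) / 4) by (apply Hcd; unfold A, B; lra).
  assert (((x * x + b3 * b3) / 2) * ((b1 * b1 + b2 * b2) / 2) <= Q * (A + B) / 4) by (apply Hcd; unfold A, B; lra).
  lra. }
assert (HA : 0 <= A) by (unfold A; lra). assert (HB : 0 <= B) by (unfold B; lra).
assert (G1 : Rabs (2 * (A * ((a2 * a2 + b2 * b2) - (a3 * a3 + b3 * b3)))) <= 2 * Q * A).
{ rewrite Rabs_mult, Rabs_mult, (Rabs_pos_eq 2), (Rabs_pos_eq A) by lra.
  assert (Rabs (a2 * a2 + b2 * b2 - (a3 * a3 + b3 * b3)) <= Q) by (split_Rabs; lra). nra. }
assert (G2 : Rabs (2 * (B * ((a3 * a3 + b3 * b3) - (a1 * a1 + b1 * b1)))) <= 2 * Q * B).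
{ rewrite Rabs_mult, Rabs_mult, (Rabs_pos_eq 2), (Rabs_pos_eq B) by lra.
  assert (Rabs (a3 * a3 + b3 * b3 - (a1 * a1 + b1 * b1)) <= Q) by (split_Rabs; lra). nra. }
assert (G3 : Rabs (4 * (x * a1 * a2 * b3 + x * a1 * b2 * a3 + x * b1 * a2 * a3 - x * b1 * b2 * b3)) <= 4 * (Q * (A + B))).
{ rewrite Rabs_mult, (Rabs_pos_eq 4) by lra. lra. }
eapply Rle_trans. apply Rabs_triang. eapply Rle_trans. apply Rplus_le_compat_r. apply Rabs_triang.
replace (6 * Q * (A + a2 * a2 + b2 * b2)) with (2 * Q * A + 2 * Q * B + 4 * (Q * (A + B))) by (unfold B; ring). lra.
Qed.

Section Sol2.
Variable f : nat -> R -> R.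
Hypothesis Hf : sol7 f.

Definition u12 t := f 2%nat t * f 2%nat t + f 3%nat t * f 3%nat t + f 4%nat t * f 4%nat t + f 5%nat t * f 5%nat t.

Lemma u12_pos : 0 < u12 0 -> forall t, 0 < u12 t.
Proof.
intros H0 t.
assert (Hnn : forall s, 0 <= u12 s) by (intros s; unfold u12; nra).
destruct (Rle_lt_or_eq_dec 0 (u12 t) (Hnn t)) as [Hlt|Heq]; auto.
exfalso.
set (Q0 := Qn (f 1%nat 0) (f 2%nat 0) (f 3%nat 0) (f 4%nat 0) (f 5%nat 0) (f 6%nat 0) (f 7%nat 0)).
assert (HQ0 : 0 <= Q0) by (unfold Q0, Qn; nra).
set (du := fun s => 2 * (f 2%nat s * ff 2 (f 1%nat s) (f 2%nat s) (f 3%nat s) (f 4%nat s) (f 5%nat s) (f 6%nat s) (f 7%nat s)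
   + f 3%nat s * ff 3 (f 1%nat s) (f 2%nat s) (f 3%nat s) (f 4%nat s) (f 5%nat s) (f 6%nat s) (f 7%nat s)
   + f 4%nat s * ff 4 (f 1%nat s) (f 2%nat s) (f 3%nat s) (f 4%nat s) (f 5%nat s) (f 6%nat s) (f 7%nat s)
   + f 5%nat s * ff 5 (f 1%nat s) (f 2%nat s) (f 3%nat s) (f 4%nat s) (f 5%nat s) (f 6%nat s) (f 7%nat s))).
assert (Hz := gronwall u12 du (6 * Q0) t ltac:(lra)).
assert (u12 0 = 0).
{ apply Hz; auto.
  - intros s. unfold u12, du. auto_derive. exd Hf. subst_der Hf. ring.
  - intros s. unfold du, u12. replace Q0 with (Qn (f 1%nat s) (f 2%nat s) (f 3%nat s) (f 4%nat s) (f 5%nat s) (f 6%nat s) (f 7%nat s)) by (unfold Q0; apply Qn_const; auto).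
    apply pair_alg. }
lra.
Qed.
End Sol2.

Definition shift (f : nat -> R -> R) : nat -> R -> R := fun k =>
  match k with 2%nat => f 4%nat | 3%nat => f 5%nat | 4%nat => f 6%nat | 5%nat => f 7%nat
  | 6%nat => f 2%nat | 7%nat => f 3%nat | _ => f k end.

Lemma sol7_shift f : sol7 f -> sol7 (shift f).
Proof.
intros H t k Hk.
assert (k = 1 \/ k = 2 \/ k = 3 \/ k = 4 \/ k = 5 \/ k = 6 \/ k = 7)%nat as Hc by lia.
destruct Hc as [->|[->|[->|[->|[->|[->| ->]]]]]]; simpl shift;
match goal with |- is_derive (f ?j) t ?v =>
  replace v with (ff j (f 1%nat t) (f 2%nat t) (f 3%nat t) (f 4%nat t) (f 5%nat t) (f 6%nat t) (f 7%nat t))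
    by (simpl; ring); apply H; lia end.
Qed.

Definition v7 (a b c d e f g : R) : vec7 := fun i => match i with
 | 1%nat => a | 2%nat => b | 3%nat => c | 4%nat => d | 5%nat => e | 6%nat => f | 7%nat => g | _ => 0 end.

Definition rc (c s a b : R) := c * a - s * b.
Definition rs (c s a b : R) := s * a + c * b.

Section Equiv.
Variables c1 s1 c2 s2 c3 s3 x a1 b1 a2 b2 a3 b3 : R.
Hypothesis H1 : c1 * c1 + s1 * s1 = 1.
Hypothesis H2 : c2 * c2 + s2 * s2 = 1.
Hypothesis H3 : c3 = c1 * c2 - s1 * s2.
Hypothesis H4 : s3 = - (s1 * c2 + c1 * s2).

Definition A1 := rc c1 s1 a1 b1.
Definition B1 := rs c1 s1 a1 b1.
Definition A2 := rc c2 s2 a2 b2.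
Definition B2 := rs c2 s2 a2 b2.
Definition A3 := rc c3 s3 a3 b3.
Definition B3 := rs c3 s3 a3 b3.

Lemma eqv1 : ff 1 x A1 B1 A2 B2 A3 B3 = ff 1 x a1 b1 a2 b2 a3 b3.
Proof. unfold A1, B1, A2, B2, A3, B3, rc, rs. subst c3 s3. simpl. nsatz. Qed.
Lemma eqv2 : ff 2 x A1 B1 A2 B2 A3 B3 = rc c1 s1 (ff 2 x a1 b1 a2 b2 a3 b3) (ff 3 x a1 b1 a2 b2 a3 b3).
Proof. unfold A1, B1, A2, B2, A3, B3, rc, rs. subst c3 s3. simpl. nsatz. Qed.
Lemma eqv3 : ff 3 x A1 B1 A2 B2 A3 B3 = rs c1 s1 (ff 2 x a1 b1 a2 b2 a3 b3) (ff 3 x a1 b1 a2 b2 a3 b3).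
Proof. unfold A1, B1, A2, B2, A3, B3, rc, rs. subst c3 s3. simpl. nsatz. Qed.
Lemma eqv4 : ff 4 x A1 B1 A2 B2 A3 B3 = rc c2 s2 (ff 4 x a1 b1 a2 b2 a3 b3) (ff 5 x a1 b1 a2 b2 a3 b3).
Proof. unfold A1, B1, A2, B2, A3, B3, rc, rs. subst c3 s3. simpl. nsatz. Qed.
Lemma eqv5 : ff 5 x A1 B1 A2 B2 A3 B3 = rs c2 s2 (ff 4 x a1 b1 a2 b2 a3 b3) (ff 5 x a1 b1 a2 b2 a3 b3).
Proof. unfold A1, B1, A2, B2, A3, B3, rc, rs. subst c3 s3. simpl. nsatz. Qed.
Lemma eqv6 : ff 6 x A1 B1 A2 B2 A3 B3 = rc c3 s3 (ff 6 x a1 b1 a2 b2 a3 b3) (ff 7 x a1 b1 a2 b2 a3 b3).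
Proof. unfold A1, B1, A2, B2, A3, B3, rc, rs. subst c3 s3. simpl. nsatz. Qed.
Lemma eqv7 : ff 7 x A1 B1 A2 B2 A3 B3 = rs c3 s3 (ff 6 x a1 b1 a2 b2 a3 b3) (ff 7 x a1 b1 a2 b2 a3 b3).
Proof. unfold A1, B1, A2, B2, A3, B3, rc, rs. subst c3 s3. simpl. nsatz. Qed.
Lemma eqv_pr : pr A1 B1 A2 B2 A3 B3 = pr a1 b1 a2 b2 a3 b3.
Proof. unfold A1, B1, A2, B2, A3, B3, rc, rs, pr. subst c3 s3. nsatz. Qed.
Lemma eqv_m1 : A1 * A1 + B1 * B1 = a1 * a1 + b1 * b1.
Proof. unfold A1, B1, rc, rs. nsatz. Qed.
Lemma eqv_m2 : A2 * A2 + B2 * B2 = a2 * a2 + b2 * b2.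
Proof. unfold A2, B2, rc, rs. nsatz. Qed.
Lemma eqv_m3 : A3 * A3 + B3 * B3 = a3 * a3 + b3 * b3.
Proof. unfold A3, B3, rc, rs. assert (c3 * c3 + s3 * s3 = 1) by (subst c3 s3; nsatz). nsatz. Qed.
End Equiv.

Definition actv (r p1 p2 x a1 b1 a2 b2 a3 b3 : R) : vec7 :=
  v7 (r * x) (r * rc (cos p1) (sin p1) a1 b1) (r * rs (cos p1) (sin p1) a1 b1)
     (r * rc (cos p2) (sin p2) a2 b2) (r * rs (cos p2) (sin p2) a2 b2)
     (r * rc (cos (- (p1 + p2))) (sin (- (p1 + p2))) a3 b3) (r * rs (cos (- (p1 + p2))) (sin (- (p1 + p2))) a3 b3).

Lemma act_eq r p1 p2 x z1 z2 z3 i : act r p1 p2 x z1 z2 z3 i =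
  actv r p1 p2 x (fst z1) (snd z1) (fst z2) (snd z2) (fst z3) (snd z3) i.
Proof.
destruct z1, z2, z3. destruct i as [|[|[|[|[|[|[|[|i]]]]]]]];
unfold act, actv, embed, v7, eiC, Cmult, RtoC, Re, Im, rc, rs; simpl; ring.
Qed.

Definition w0 x a1 b1 a2 b2 a3 b3 := v7 x a1 b1 a2 b2 a3 b3.
Definition w1 (x a1 b1 a2 b2 a3 b3 : R) := v7 0 (- b1) a1 0 0 b3 (- a3).
Definition w2 (x a1 b1 a2 b2 a3 b3 : R) := v7 0 0 0 (- b2) a2 b3 (- a3).
Definition wV x a1 b1 a2 b2 a3 b3 := v7 (ff 1 x a1 b1 a2 b2 a3 b3) (ff 2 x a1 b1 a2 b2 a3 b3)
  (ff 3 x a1 b1 a2 b2 a3 b3) (ff 4 x a1 b1 a2 b2 a3 b3) (ff 5 x a1 b1 a2 b2 a3 b3)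
  (ff 6 x a1 b1 a2 b2 a3 b3) (ff 7 x a1 b1 a2 b2 a3 b3).
Definition vscal (c : R) (v : vec7) : vec7 := fun i => c * v i.

Notation RP p1 p2 x a1 b1 a2 b2 a3 b3 :=
  (x, rc (cos p1) (sin p1) a1 b1, rs (cos p1) (sin p1) a1 b1,
      rc (cos p2) (sin p2) a2 b2, rs (cos p2) (sin p2) a2 b2,
      rc (cos (- (p1 + p2))) (sin (- (p1 + p2))) a3 b3, rs (cos (- (p1 + p2))) (sin (- (p1 + p2))) a3 b3).

Definition app7 (g : R -> R -> R -> R -> R -> R -> R -> vec7) (P : R * R * R * R * R * R * R) : vec7 :=
  let '(x, a1, b1, a2, b2, a3, b3) := P in g x a1 b1 a2 b2 a3 b3.

Lemma D_r r p1 p2 x a1 b1 a2 b2 a3 b3 i :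
  is_derive (fun s => actv s p1 p2 x a1 b1 a2 b2 a3 b3 i) r (app7 w0 (RP p1 p2 x a1 b1 a2 b2 a3 b3) i).
Proof.
unfold app7. destruct i as [|[|[|[|[|[|[|[|i]]]]]]]]; unfold actv, w0, v7, rc, rs; auto_derive; auto; ring.
Qed.

Lemma D_p1 r p1 p2 x a1 b1 a2 b2 a3 b3 i :
  is_derive (fun s => actv r s p2 x a1 b1 a2 b2 a3 b3 i) p1 (vscal r (app7 w1 (RP p1 p2 x a1 b1 a2 b2 a3 b3)) i).
Proof.
unfold app7, vscal. destruct i as [|[|[|[|[|[|[|[|i]]]]]]]]; unfold actv, w1, v7, rc, rs; auto_derive; auto; ring.
Qed.

Lemma D_p2 r p1 p2 x a1 b1 a2 b2 a3 b3 i :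
  is_derive (fun s => actv r p1 s x a1 b1 a2 b2 a3 b3 i) p2 (vscal r (app7 w2 (RP p1 p2 x a1 b1 a2 b2 a3 b3)) i).
Proof.
unfold app7, vscal. destruct i as [|[|[|[|[|[|[|[|i]]]]]]]]; unfold actv, w2, v7, rc, rs; auto_derive; auto; ring.
Qed.

Lemma cs3 p1 p2 : cos (- (p1 + p2)) = cos p1 * cos p2 - sin p1 * sin p2 /\
                  sin (- (p1 + p2)) = - (sin p1 * cos p2 + cos p1 * sin p2).
Proof. rewrite cos_neg, sin_neg, cos_plus, sin_plus. split; ring. Qed.

Lemma cs1 p : cos p * cos p + sin p * sin p = 1.
Proof. pose proof (sin2_cos2 p). unfold Rsqr in H. lra. Qed.

Lemma D_t (f : nat -> R -> R) (Hf : sol7 f) r p1 p2 t i :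
  is_derive (fun s => actv r p1 p2 (f 1%nat s) (f 2%nat s) (f 3%nat s) (f 4%nat s) (f 5%nat s) (f 6%nat s) (f 7%nat s) i) t
    (vscal r (app7 wV (RP p1 p2 (f 1%nat t) (f 2%nat t) (f 3%nat t) (f 4%nat t) (f 5%nat t) (f 6%nat t) (f 7%nat t))) i).
Proof.
destruct (cs3 p1 p2) as [E3 E4].
pose proof (cs1 p1) as C1. pose proof (cs1 p2) as C2.
unfold app7, vscal, wV.
set (x := f 1%nat t). set (a1 := f 2%nat t). set (b1 := f 3%nat t). set (a2 := f 4%nat t).
set (b2 := f 5%nat t). set (a3 := f 6%nat t). set (b3 := f 7%nat t).
change (rc (cos p1) (sin p1) a1 b1) with (A1 (cos p1) (sin p1) a1 b1).
change (rs (cos p1) (sin p1) a1 b1) with (B1 (cos p1) (sin p1) a1 b1).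
change (rc (cos p2) (sin p2) a2 b2) with (A2 (cos p2) (sin p2) a2 b2).
change (rs (cos p2) (sin p2) a2 b2) with (B2 (cos p2) (sin p2) a2 b2).
change (rc (cos (- (p1 + p2))) (sin (- (p1 + p2))) a3 b3) with (A3 (cos (- (p1 + p2))) (sin (- (p1 + p2))) a3 b3).
change (rs (cos (- (p1 + p2))) (sin (- (p1 + p2))) a3 b3) with (B3 (cos (- (p1 + p2))) (sin (- (p1 + p2))) a3 b3).
destruct i as [|[|[|[|[|[|[|[|i]]]]]]]]; unfold v7.
- unfold actv, v7. auto_derive; auto; ring.
- rewrite (eqv1 (cos p1) (sin p1) (cos p2) (sin p2) _ _ x a1 b1 a2 b2 a3 b3 C1 C2 E3 E4).
  unfold actv, v7. auto_derive. exd Hf. subst_der Hf. fold x a1 b1 a2 b2 a3 b3. ring.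
- rewrite (eqv2 (cos p1) (sin p1) (cos p2) (sin p2) _ _ x a1 b1 a2 b2 a3 b3 C1 C2 E3 E4).
  unfold actv, v7, rc, rs. auto_derive. exd Hf. subst_der Hf. fold x a1 b1 a2 b2 a3 b3. ring.
- rewrite (eqv3 (cos p1) (sin p1) (cos p2) (sin p2) _ _ x a1 b1 a2 b2 a3 b3 C1 C2 E3 E4).
  unfold actv, v7, rc, rs. auto_derive. exd Hf. subst_der Hf. fold x a1 b1 a2 b2 a3 b3. ring.
- rewrite (eqv4 (cos p1) (sin p1) (cos p2) (sin p2) _ _ x a1 b1 a2 b2 a3 b3 C1 C2 E3 E4).
  unfold actv, v7, rc, rs. auto_derive. exd Hf. subst_der Hf. fold x a1 b1 a2 b2 a3 b3. ring.
- rewrite (eqv5 (cos p1) (sin p1) (cos p2) (sin p2) _ _ x a1 b1 a2 b2 a3 b3 C1 C2 E3 E4).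
  unfold actv, v7, rc, rs. auto_derive. exd Hf. subst_der Hf. fold x a1 b1 a2 b2 a3 b3. ring.
- rewrite (eqv6 (cos p1) (sin p1) (cos p2) (sin p2) _ _ x a1 b1 a2 b2 a3 b3 C1 C2 E3 E4).
  unfold actv, v7, rc, rs. auto_derive. exd Hf. subst_der Hf. fold x a1 b1 a2 b2 a3 b3. ring.
- rewrite (eqv7 (cos p1) (sin p1) (cos p2) (sin p2) _ _ x a1 b1 a2 b2 a3 b3 C1 C2 E3 E4).
  unfold actv, v7, rc, rs. auto_derive. exd Hf. subst_der Hf. fold x a1 b1 a2 b2 a3 b3. ring.
- unfold actv, v7. auto_derive; auto; ring.
Qed.

Section Phi.
Variables x a1 b1 a2 b2 a3 b3 : R.
Lemma t1 : phi0 (w0 x a1 b1 a2 b2 a3 b3) (w1 x a1 b1 a2 b2 a3 b3) (w2 x a1 b1 a2 b2 a3 b3) = -3 * pr a1 b1 a2 b2 a3 b3.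
Proof. unfold phi0, dx3, w0, w1, w2, v7, pr. ring. Qed.
Lemma t2 : phi0 (w0 x a1 b1 a2 b2 a3 b3) (w1 x a1 b1 a2 b2 a3 b3) (wV x a1 b1 a2 b2 a3 b3) = 0.
Proof. unfold phi0, dx3, w0, w1, wV, v7. simpl. ring. Qed.
Lemma t3 : phi0 (w0 x a1 b1 a2 b2 a3 b3) (w2 x a1 b1 a2 b2 a3 b3) (wV x a1 b1 a2 b2 a3 b3) = 0.
Proof. unfold phi0, dx3, w0, w2, wV, v7. simpl. ring. Qed.
Lemma t4 : phi0 (w1 x a1 b1 a2 b2 a3 b3) (w2 x a1 b1 a2 b2 a3 b3) (wV x a1 b1 a2 b2 a3 b3) = 0.
Proof. unfold phi0, dx3, w1, w2, wV, v7. simpl. ring. Qed.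
End Phi.

Lemma phi0_s1 c u v w : phi0 (vscal c u) v w = c * phi0 u v w.
Proof. unfold phi0, dx3, vscal. ring. Qed.
Lemma phi0_s2 c u v w : phi0 u (vscal c v) w = c * phi0 u v w.
Proof. unfold phi0, dx3, vscal. ring. Qed.
Lemma phi0_s3 c u v w : phi0 u v (vscal c w) = c * phi0 u v w.
Proof. unfold phi0, dx3, vscal. ring. Qed.
Lemma phi0_r12 u w : phi0 u u w = 0.
Proof. unfold phi0, dx3. ring. Qed.
Lemma phi0_r23 u v : phi0 u v v = 0.
Proof. unfold phi0, dx3. ring. Qed.
Lemma phi0_r13 u v : phi0 u v u = 0.
Proof. unfold phi0, dx3. ring. Qed.
Lemma phi0_perm u v w : phi0 u v w = 0 ->
  phi0 v u w = 0 /\ phi0 u w v = 0 /\ phi0 w v u = 0 /\ phi0 v w u = 0 /\ phi0 w u v = 0.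
Proof. unfold phi0, dx3. intros H. repeat split; lra. Qed.

Lemma mul0 a b : b = 0 -> a * b = 0.
Proof. intros ->; ring. Qed.

Ltac zer := first [ apply phi0_r12 | apply phi0_r23 | apply phi0_r13 |
  match goal with H : phi0 ?a ?b ?c = 0 |- _ =>
    first [ exact H | apply (proj1 (phi0_perm _ _ _ H)) | apply (proj1 (proj2 (phi0_perm _ _ _ H)))
          | apply (proj1 (proj2 (proj2 (phi0_perm _ _ _ H))))
          | apply (proj1 (proj2 (proj2 (proj2 (phi0_perm _ _ _ H)))))
          | apply (proj2 (proj2 (proj2 (proj2 (phi0_perm _ _ _ H))))) ] end ].

Definition bv (r x a1 b1 a2 b2 a3 b3 : R) (j : nat) : vec7 :=
  match j with
  | 0%nat => w0 x a1 b1 a2 b2 a3 b3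
  | 1%nat => vscal r (w1 x a1 b1 a2 b2 a3 b3)
  | 2%nat => vscal r (w2 x a1 b1 a2 b2 a3 b3)
  | _ => vscal r (wV x a1 b1 a2 b2 a3 b3)
  end.

Lemma phi0_bv r x a1 b1 a2 b2 a3 b3 : pr a1 b1 a2 b2 a3 b3 = 0 ->
  forall j k l, (j < 4)%nat -> (k < 4)%nat -> (l < 4)%nat ->
  phi0 (bv r x a1 b1 a2 b2 a3 b3 j) (bv r x a1 b1 a2 b2 a3 b3 k) (bv r x a1 b1 a2 b2 a3 b3 l) = 0.
Proof.
intros Hp j k l Hj Hk Hl.
assert (Z1 := t1 x a1 b1 a2 b2 a3 b3). rewrite Hp, Rmult_0_r in Z1.
assert (Z2 := t2 x a1 b1 a2 b2 a3 b3). assert (Z3 := t3 x a1 b1 a2 b2 a3 b3). assert (Z4 := t4 x a1 b1 a2 b2 a3 b3).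
destruct j as [|[|[|[|j]]]]; try lia; destruct k as [|[|[|[|k]]]]; try lia; destruct l as [|[|[|[|l]]]]; try lia;
unfold bv; rewrite ?phi0_s1, ?phi0_s2, ?phi0_s3; repeat apply mul0; zer.
Qed.

Lemma sq0 a b : a * a + b * b = 0 -> a = 0 /\ b = 0.
Proof. intros H. split; nra. Qed.

Ltac comb_ E1 E2 E3 E4 E5 E6 E7 k1 k2 k3 k4 k5 k6 k7 :=
  let t1 := type of E1 in let t2 := type of E2 in let t3 := type of E3 in let t4 := type of E4 in
  let t5 := type of E5 in let t6 := type of E6 in let t7 := type of E7 in
  lazymatch constr:((t1, t2, t3, t4, t5, t6, t7)) with
  | (?L1 = 0, ?L2 = 0, ?L3 = 0, ?L4 = 0, ?L5 = 0, ?L6 = 0, ?L7 = 0) =>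
    transitivity (k1 * L1 + k2 * L2 + k3 * L3 + k4 * L4 + k5 * L5 + k6 * L6 + k7 * L7);
    [ring | rewrite E1, E2, E3, E4, E5, E6, E7; ring]
  end.

Lemma indep4 x a1 b1 a2 b2 a3 b3 d0 d1 d2 d3 :
  pr a1 b1 a2 b2 a3 b3 = 0 ->
  0 < a1 * a1 + b1 * b1 + (a2 * a2 + b2 * b2) -> 0 < a2 * a2 + b2 * b2 + (a3 * a3 + b3 * b3) ->
  0 < a3 * a3 + b3 * b3 + (a1 * a1 + b1 * b1) ->
  (forall i, (1 <= i <= 7)%nat -> d0 * w0 x a1 b1 a2 b2 a3 b3 i + d1 * w1 x a1 b1 a2 b2 a3 b3 i +
     d2 * w2 x a1 b1 a2 b2 a3 b3 i + d3 * wV x a1 b1 a2 b2 a3 b3 i = 0) ->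
  d0 = 0 /\ d1 = 0 /\ d2 = 0 /\ d3 = 0.
Proof.
intros Hp Hu12 Hu23 Hu31 E.
pose proof (E 1%nat ltac:(lia)) as E1. pose proof (E 2%nat ltac:(lia)) as E2.
pose proof (E 3%nat ltac:(lia)) as E3. pose proof (E 4%nat ltac:(lia)) as E4.
pose proof (E 5%nat ltac:(lia)) as E5. pose proof (E 6%nat ltac:(lia)) as E6.
pose proof (E 7%nat ltac:(lia)) as E7. clear E.
unfold w0, w1, w2, wV, v7 in E1, E2, E3, E4, E5, E6, E7. simpl in E1, E2, E3, E4, E5, E6, E7.
assert (HA : 0 <= a1 * a1 + b1 * b1) by nra. assert (HB : 0 <= a2 * a2 + b2 * b2) by nra.
assert (HC : 0 <= a3 * a3 + b3 * b3) by nra. assert (Hx : 0 <= x * x) by nra.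
assert (S0 : d0 * (x * x + (a1 * a1 + b1 * b1) + (a2 * a2 + b2 * b2) + (a3 * a3 + b3 * b3)) = 0)
  by comb_ E1 E2 E3 E4 E5 E6 E7 x a1 b1 a2 b2 a3 b3.
assert (H0 : d0 = 0).
{ apply Rmult_integral in S0. destruct S0; auto. lra. }
subst d0.
assert (S3 : 3 * (d3 * pim a1 b1 a2 b2 a3 b3) = 0) by (unfold pim; comb_ E1 E2 E3 E4 E5 E6 E7 (-1) 0 0 0 0 0 0).
assert (H3 : d3 = 0).
{ destruct (Req_dec (pim a1 b1 a2 b2 a3 b3) 0) as [Hq|Hq].
  - assert (Hprod : (a1 * a1 + b1 * b1) * (a2 * a2 + b2 * b2) * (a3 * a3 + b3 * b3) = 0).
    { transitivity (pr a1 b1 a2 b2 a3 b3 ^ 2 + pim a1 b1 a2 b2 a3 b3 ^ 2).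
      unfold pr, pim; ring. rewrite Hp, Hq; ring. }
    apply Rmult_integral in Hprod. destruct Hprod as [Hprod|Hc].
    apply Rmult_integral in Hprod. destruct Hprod as [Ha|Hb].
    + apply sq0 in Ha. destruct Ha; subst a1 b1.
      assert (S : d3 * ((a3 * a3 + b3 * b3) * (a2 * a2 + b2 * b2)) = 0) by comb_ E1 E2 E3 E4 E5 E6 E7 0 0 0 a2 b2 0 0.
      apply Rmult_integral in S. destruct S as [S|S]; auto.
      apply Rmult_integral in S. lra.
    + apply sq0 in Hb. destruct Hb; subst a2 b2.
      assert (S : d3 * ((a1 * a1 + b1 * b1) * (a3 * a3 + b3 * b3)) = 0) by comb_ E1 E2 E3 E4 E5 E6 E7 0 0 0 0 0 a3 b3.
      apply Rmult_integral in S. destruct S as [S|S]; auto.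
      apply Rmult_integral in S. lra.
    + apply sq0 in Hc. destruct Hc; subst a3 b3.
      assert (S : d3 * ((a2 * a2 + b2 * b2) * (a1 * a1 + b1 * b1)) = 0) by comb_ E1 E2 E3 E4 E5 E6 E7 0 a1 b1 0 0 0 0.
      apply Rmult_integral in S. destruct S as [S|S]; auto.
      apply Rmult_integral in S. lra.
  - apply Rmult_integral in S3. destruct S3 as [S3|S3]; [lra|].
    apply Rmult_integral in S3. tauto. }
subst d3.
assert (S1 : d1 * (a1 * a1 + b1 * b1) = 0) by comb_ E1 E2 E3 E4 E5 E6 E7 0 (- b1) a1 0 0 0 0.
assert (S2 : d2 * (a2 * a2 + b2 * b2) = 0) by comb_ E1 E2 E3 E4 E5 E6 E7 0 0 0 (- b2) a2 0 0.
assert (S4 : (d1 + d2) * (a3 * a3 + b3 * b3) = 0) by comb_ E1 E2 E3 E4 E5 E6 E7 0 0 0 0 0 b3 (- a3).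
apply Rmult_integral in S1. apply Rmult_integral in S2. apply Rmult_integral in S4.
destruct S1 as [S1|S1]; destruct S2 as [S2|S2]; destruct S4 as [S4|S4]; repeat split; lra.
Qed.

Lemma D_r' r p1 p2 x z1 z2 z3 i :
  is_derive (fun s => act s p1 p2 x z1 z2 z3 i) r
    (app7 w0 (RP p1 p2 x (fst z1) (snd z1) (fst z2) (snd z2) (fst z3) (snd z3)) i).
Proof. eapply is_derive_ext. intros s; symmetry; apply act_eq. apply D_r. Qed.
Lemma D_p1' r p1 p2 x z1 z2 z3 i :
  is_derive (fun s => act r s p2 x z1 z2 z3 i) p1
    (vscal r (app7 w1 (RP p1 p2 x (fst z1) (snd z1) (fst z2) (snd z2) (fst z3) (snd z3))) i).
Proof. eapply is_derive_ext. intros s; symmetry; apply act_eq. apply D_p1. Qed.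
Lemma D_p2' r p1 p2 x z1 z2 z3 i :
  is_derive (fun s => act r p1 s x z1 z2 z3 i) p2
    (vscal r (app7 w2 (RP p1 p2 x (fst z1) (snd z1) (fst z2) (snd z2) (fst z3) (snd z3))) i).
Proof. eapply is_derive_ext. intros s; symmetry; apply act_eq. apply D_p2. Qed.

Lemma od_eq x z1 z2 z3 k i : orbit_diff x z1 z2 z3 k i =
  (match k with 0%nat => app7 w0 (RP 0 0 x (fst z1) (snd z1) (fst z2) (snd z2) (fst z3) (snd z3))
   | 1%nat => vscal 1 (app7 w1 (RP 0 0 x (fst z1) (snd z1) (fst z2) (snd z2) (fst z3) (snd z3)))
   | _ => vscal 1 (app7 w2 (RP 0 0 x (fst z1) (snd z1) (fst z2) (snd z2) (fst z3) (snd z3))) end) i.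
Proof.
unfold orbit_diff. destruct k as [|[|k]]; apply is_derive_unique; [apply D_r'|apply D_p1'|apply D_p2'].
Qed.

Lemma dim3_pos a w1 w2 w3 : orbit_dim3 a w1 w2 w3 ->
  0 < fst w1 * fst w1 + snd w1 * snd w1 + (fst w2 * fst w2 + snd w2 * snd w2) /\
  0 < fst w2 * fst w2 + snd w2 * snd w2 + (fst w3 * fst w3 + snd w3 * snd w3) /\
  0 < fst w3 * fst w3 + snd w3 * snd w3 + (fst w1 * fst w1 + snd w1 * snd w1).
Proof.
intros H. unfold orbit_dim3, lin_indep in H.
destruct w1 as [a1 b1], w2 as [a2 b2], w3 as [a3 b3]. simpl fst; simpl snd.
assert (Hnn : forall u v, 0 <= u * u + v * v) by (intros; nra).
split; [|split].
- destruct (Rle_lt_or_eq_dec 0 _ (Rplus_le_le_0_compat _ _ (Hnn a1 b1) (Hnn a2 b2))) as [Hl|He]; auto.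
  exfalso. assert (He1 : a1 * a1 + b1 * b1 = 0) by (pose proof (Hnn a1 b1); pose proof (Hnn a2 b2); lra).
  assert (He2 : a2 * a2 + b2 * b2 = 0) by (pose proof (Hnn a1 b1); pose proof (Hnn a2 b2); lra).
  apply sq0 in He1; apply sq0 in He2. destruct He1, He2; subst.
  assert (Hc := H (fun k => match k with 1%nat => 1 | 2%nat => -1 | _ => 0 end)).
  assert (1 = 0) as Hf; [|lra].
  apply (Hc) with (k := 1%nat); [|lia].
  intros i Hi. cbn [sum_f_R0 Nat.sub]. rewrite !od_eq. unfold vscal, app7, w0, w1, w2, v7, rc, rs.
  destruct i as [|[|[|[|[|[|[|[|i]]]]]]]]; simpl; ring.
- destruct (Rle_lt_or_eq_dec 0 _ (Rplus_le_le_0_compat _ _ (Hnn a2 b2) (Hnn a3 b3))) as [Hl|He]; auto.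
  exfalso. assert (He1 : a2 * a2 + b2 * b2 = 0) by (pose proof (Hnn a2 b2); pose proof (Hnn a3 b3); lra).
  assert (He2 : a3 * a3 + b3 * b3 = 0) by (pose proof (Hnn a2 b2); pose proof (Hnn a3 b3); lra).
  apply sq0 in He1; apply sq0 in He2. destruct He1, He2; subst.
  assert (Hc := H (fun k => match k with 2%nat => 1 | _ => 0 end)).
  assert (1 = 0) as Hf; [|lra].
  apply (Hc) with (k := 2%nat); [|lia].
  intros i Hi. cbn [sum_f_R0 Nat.sub]. rewrite !od_eq. unfold vscal, app7, w0, w1, w2, v7, rc, rs.
  destruct i as [|[|[|[|[|[|[|[|i]]]]]]]]; simpl; ring.
- destruct (Rle_lt_or_eq_dec 0 _ (Rplus_le_le_0_compat _ _ (Hnn a3 b3) (Hnn a1 b1))) as [Hl|He]; auto.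
  exfalso. assert (He1 : a3 * a3 + b3 * b3 = 0) by (pose proof (Hnn a3 b3); pose proof (Hnn a1 b1); lra).
  assert (He2 : a1 * a1 + b1 * b1 = 0) by (pose proof (Hnn a3 b3); pose proof (Hnn a1 b1); lra).
  apply sq0 in He1; apply sq0 in He2. destruct He1, He2; subst.
  assert (Hc := H (fun k => match k with 1%nat => 1 | _ => 0 end)).
  assert (1 = 0) as Hf; [|lra].
  apply (Hc) with (k := 1%nat); [|lia].
  intros i Hi. cbn [sum_f_R0 Nat.sub]. rewrite !od_eq. unfold vscal, app7, w0, w1, w2, v7, rc, rs.
  destruct i as [|[|[|[|[|[|[|[|i]]]]]]]]; simpl; ring.
Qed.

Lemma rot_inv p1 p2 a1 b1 a2 b2 a3 b3 :
  let c1 := cos p1 in let s1 := sin p1 in let c2 := cos p2 in let s2 := sin p2 in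
  let c3 := cos (- (p1 + p2)) in let s3 := sin (- (p1 + p2)) in
  pr (rc c1 s1 a1 b1) (rs c1 s1 a1 b1) (rc c2 s2 a2 b2) (rs c2 s2 a2 b2) (rc c3 s3 a3 b3) (rs c3 s3 a3 b3)
    = pr a1 b1 a2 b2 a3 b3 /\
  rc c1 s1 a1 b1 * rc c1 s1 a1 b1 + rs c1 s1 a1 b1 * rs c1 s1 a1 b1 = a1 * a1 + b1 * b1 /\
  rc c2 s2 a2 b2 * rc c2 s2 a2 b2 + rs c2 s2 a2 b2 * rs c2 s2 a2 b2 = a2 * a2 + b2 * b2 /\
  rc c3 s3 a3 b3 * rc c3 s3 a3 b3 + rs c3 s3 a3 b3 * rs c3 s3 a3 b3 = a3 * a3 + b3 * b3.
Proof.
intros c1 s1 c2 s2 c3 s3.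
destruct (cs3 p1 p2) as [E3 E4]. pose proof (cs1 p1) as C1. pose proof (cs1 p2) as C2.
fold c1 s1 c2 s2 c3 s3 in E3, E4, C1, C2.
split; [|split; [|split]].
- apply eqv_pr; auto.
- unfold rc, rs. nsatz.
- unfold rc, rs. nsatz.
- assert (c3 * c3 + s3 * s3 = 1) by (rewrite E3, E4; nsatz). unfold rc, rs. nsatz.
Qed.

Lemma st_Z (Z : R -> vec7) s i : (1 <= i <= 7)%nat ->
  st (fun t => Z t 1%nat) (fun t => (Z t 2%nat, Z t 3%nat)) (fun t => (Z t 4%nat, Z t 5%nat))
     (fun t => (Z t 6%nat, Z t 7%nat)) s i = Z s i.
Proof.
intros Hi. assert (i = 1 \/ i = 2 \/ i = 3 \/ i = 4 \/ i = 5 \/ i = 6 \/ i = 7)%nat as Hc by lia.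
destruct Hc as [->|[->|[->|[->|[->|[->| ->]]]]]]; reflexivity.
Qed.

Lemma pr_Re (u v w : C) : pr (fst u) (snd u) (fst v) (snd v) (fst w) (snd w) = Re (Cmult (Cmult u v) w).
Proof. destruct u, v, w. unfold pr, Cmult, Re; simpl. ring. Qed.

Lemma Qn_C (x : R) (u v w : C) : Qn x (fst u) (snd u) (fst v) (snd v) (fst w) (snd w) =
  x ^ 2 + Cmod u ^ 2 + Cmod v ^ 2 + Cmod w ^ 2.
Proof. rewrite !Cmod_sq. unfold Qn. ring. Qed.

Definition tw1 := w1.
Definition tw2 := w2.

Definition bvP (r : R) (P : R * R * R * R * R * R * R) (k : nat) : vec7 :=
  let '(x, a1, b1, a2, b2, a3, b3) := P in bv r x a1 b1 a2 b2 a3 b3 k.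

Theorem theorem6p4 (a : R) (w1 w2 w3 : C) :
  Re (Cmult (Cmult w1 w2) w3) = 0 ->
  orbit_dim3 a w1 w2 w3 ->
  (exists (x1 : R -> R) (z1 z2 z3 : R -> C),
     is_global_solution x1 z1 z2 z3 /\
     x1 0 = a /\ z1 0 = w1 /\ z2 0 = w2 /\ z3 0 = w3) /\
  (forall (x1 : R -> R) (z1 z2 z3 : R -> C),
     is_global_solution x1 z1 z2 z3 ->
     x1 0 = a -> z1 0 = w1 -> z2 0 = w2 -> z3 0 = w3 ->
     (forall t, Re (Cmult (Cmult (z1 t) (z2 t)) (z3 t)) = 0) /\
     (forall t, x1 t ^ 2 + Cmod (z1 t) ^ 2 + Cmod (z2 t) ^ 2 + Cmod (z3 t) ^ 2
                = a ^ 2 + Cmod w1 ^ 2 + Cmod w2 ^ 2 + Cmod w3 ^ 2) /\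
     coassociative_param
       (fun r p1 p2 t => act r p1 p2 (x1 t) (z1 t) (z2 t) (z3 t))).
Proof.
intros HRe Hdim. split.
- destruct (exist_real (embed a w1 w2 w3)) as [Z [HZ0 HZd]].
  exists (fun t => Z t 1%nat), (fun t => (Z t 2%nat, Z t 3%nat)), (fun t => (Z t 4%nat, Z t 5%nat)),
    (fun t => (Z t 6%nat, Z t 7%nat)).
  split; [|split; [|split; [|split]]].
  + apply glob_iff_real. intros t i Hi.
    apply (is_derive_ext (fun s => Z s i)). intros s; symmetry; apply st_Z; auto.
    replace (FF (st (fun t => Z t 1%nat) (fun t => (Z t 2%nat, Z t 3%nat)) (fun t => (Z t 4%nat, Z t 5%nat))
     (fun t => (Z t 6%nat, Z t 7%nat)) t) i) with (FF (Z t) i).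
    apply HZd; auto.
    unfold FF. rewrite !st_Z by lia. reflexivity.
  + rewrite HZ0. reflexivity.
  + rewrite !HZ0. destruct w1; reflexivity.
  + rewrite !HZ0. destruct w2; reflexivity.
  + rewrite !HZ0. destruct w3; reflexivity.
- intros x1 z1 z2 z3 Hsol H0 H1 H2 H3.
  set (f := fun k s => st x1 z1 z2 z3 s k).
  assert (Hf : sol7 f).
  { intros t k Hk. destruct (glob_iff_real x1 z1 z2 z3) as [G _]. apply (G Hsol t k Hk). }
  assert (Hpr : forall t, pr (f 2%nat t) (f 3%nat t) (f 4%nat t) (f 5%nat t) (f 6%nat t) (f 7%nat t) = 0).
  { intros t. rewrite (pr_const f Hf t). unfold f, st, embed, Re, Im. rewrite H1, H2, H3.
    rewrite pr_Re. exact HRe. }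
  assert (HQ : forall t, Qn (f 1%nat t) (f 2%nat t) (f 3%nat t) (f 4%nat t) (f 5%nat t) (f 6%nat t) (f 7%nat t) =
     a ^ 2 + Cmod w1 ^ 2 + Cmod w2 ^ 2 + Cmod w3 ^ 2).
  { intros t. rewrite (Qn_const f Hf t). unfold f, st, embed, Re, Im. rewrite H0, H1, H2, H3. apply Qn_C. }
  destruct (dim3_pos a w1 w2 w3 Hdim) as [P12 [P23 P31]].
  assert (U12 : forall t, 0 < u12 f t).
  { apply u12_pos; auto. unfold u12, f, st, embed, Re, Im. rewrite H1, H2. lra. }
  assert (U23 : forall t, 0 < u12 (shift f) t).
  { apply u12_pos. apply sol7_shift; auto. unfold u12, shift, f, st, embed, Re, Im. rewrite H2, H3. lra. }
  assert (U31 : forall t, 0 < u12 (shift (shift f)) t).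
  { apply u12_pos. apply sol7_shift, sol7_shift; auto. unfold u12, shift, f, st, embed, Re, Im. rewrite H3, H1. lra. }
  split; [|split].
  + intros t. rewrite <- pr_Re. apply (Hpr t).
  + intros t. rewrite <- Qn_C. apply (HQ t).
  + intros r p1 p2 t Hr.
    set (F := fun r p1 p2 t => act r p1 p2 (x1 t) (z1 t) (z2 t) (z3 t)).
    set (P := RP p1 p2 (f 1%nat t) (f 2%nat t) (f 3%nat t) (f 4%nat t) (f 5%nat t) (f 6%nat t) (f 7%nat t)).
    assert (Dr : forall i, is_derive (fun s => F s p1 p2 t i) r (bvP r P 0 i)).
    { intros i. apply D_r'. }
    assert (Dp1 : forall i, is_derive (fun s => F r s p2 t i) p1 (bvP r P 1 i)).
    { intros i. apply D_p1'. }
    assert (Dp2 : forall i, is_derive (fun s => F r p1 s t i) p2 (bvP r P 2 i)).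
    { intros i. apply D_p2'. }
    assert (Dt : forall i, is_derive (fun s => F r p1 p2 s i) t (bvP r P 3 i)).
    { intros i. eapply is_derive_ext. intros s; symmetry; apply act_eq. exact (D_t f Hf r p1 p2 t i). }
    assert (HP : forall k, (k < 4)%nat -> partial4 F r p1 p2 t k = bvP r P k).
    { intros k Hk. apply functional_extensionality. intros i. unfold partial4.
      destruct k as [|[|[|[|k]]]]; try lia; apply is_derive_unique; auto. }
    destruct (rot_inv p1 p2 (f 2%nat t) (f 3%nat t) (f 4%nat t) (f 5%nat t) (f 6%nat t) (f 7%nat t))
      as [R1 [R2 [R3 R4]]].
    split; [|split].
    * intros i Hi. split; [exists (bvP r P 0 i); apply Dr|split; [exists (bvP r P 1 i); apply Dp1|split; [exists (bvP r P 2 i); apply Dp2| exists (bvP r P 3 i); apply Dt]]].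
    * intros c Hc k Hk.
      assert (Hi : forall i, (1 <= i <= 7)%nat ->
        c 0%nat * app7 w0 P i + (c 1%nat * r) * app7 tw1 P i + (c 2%nat * r) * app7 tw2 P i + (c 3%nat * r) * app7 wV P i = 0).
      { intros i Hi. rewrite <- (Hc i Hi). cbn [sum_f_R0 Nat.sub]. rewrite !HP by lia.
        unfold P, bvP, bv, app7, vscal, tw1, tw2. ring. }
      unfold P, app7, tw1, tw2 in Hi.
      assert (Hd := indep4 _ _ _ _ _ _ _ _ _ _ _ ltac:(rewrite R1; apply Hpr) ltac:(rewrite R2, R3; pose proof (U12 t) as HU; unfold u12 in HU; lra)
        ltac:(rewrite R3, R4; pose proof (U23 t) as HU; unfold u12, shift in HU; cbv beta iota in HU; lra)
        ltac:(rewrite R4, R2; pose proof (U31 t) as HU; unfold u12, shift in HU; cbv beta iota in HU; lra) Hi).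
      destruct Hd as [D0 [D1 [D2 D3]]].
      destruct k as [|[|[|[|k]]]]; try lia; auto.
      apply Rmult_integral in D1; destruct D1; [auto|lra].
      apply Rmult_integral in D2; destruct D2; [auto|lra].
      apply Rmult_integral in D3; destruct D3; [auto|lra].
    * intros j k l Hj Hk Hl. rewrite !HP by lia. unfold P, bvP.
      apply phi0_bv; auto. rewrite R1; apply Hpr.
Qed.
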